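(* Let $\mathcal X$ be the Hawaiian earring and let $g:[0,1]\to\mathcal X$ be the loop defined below. If $f:[0,1]\to\mathcal X$ is a loop with $f(0)=f(1)=0$ that is homotopic (rel endpoints) to $g$, then $|f^{-1}(0)|\ge c$; in particular $f$ is not a $c$-loop.
   Context: For $n\in\mathbb N=\{1,2,\dots\}$, $C_n=\{(x,y)\in\mathbb R^2: x^2+(y-\tfrac1n)^2=\tfrac1{n^2}\}$ (identified with $\{\tfrac1ne^{2\pi i\theta}+\tfrac in\}\subseteq\mathbb C$), and $\mathcal X=\bigcup_nC_n$, with base point $0$. For $n\in\mathbb N$, let $(c_n^1,d_n^1),\dots,(c_n^{2^{n-1}},d_n^{2^{n-1}})$ be the $2^{n-1}$ open intervals removed at the $n$-th stage of the middle-thirds construction of the Cantor set, listed from left to right (so $(c_1^1,d_1^1)=(\tfrac13,\tfrac23)$, $(c_2^1,d_2^1)=(\tfrac19,\tfrac29)$, $(c_2^2,d_2^2)=(\tfrac79,\tfrac89)$, ...), and enumerate all of them as $(a_k,b_k)$, $k\in\mathbb N$, by $(a_{2^{n-1}+i-1},b_{2^{n-1}+i-1})=(c_n^i,d_n^i)$ for $1\le i\le 2^{n-1}$. Define $g:[0,1]\to\mathcal X$ by $g(x)=\tfrac1ne^{2\pi i(\frac{x-a_n}{b_n-a_n}-\frac14)}+\tfrac in$ if $x\in(a_n,b_n)$ for some $n$, and $g(x)=0$ otherwise (so on $(a_n,b_n)$, $g$ runs once around $C_n$ starting and ending at $0$). $c$ is the cardinality of $\mathbb R$; a $c$-loop is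 a continuous loop all of whose fibres have cardinality $<c$. *)

(* Defs.v *)
From Stdlib Require Import Reals Lra Lia Classical ClassicalEpsilon.
Open Scope R_scope.

Definition pt : Type := (R * R)%type.
Definition origin : pt := (0, 0).

Definition dist2 (p q : pt) : R :=
  sqrt ((fst p - fst q) ^ 2 + (snd p - snd q) ^ 2).

Definition in_circle (n : nat) (p : pt) : Prop :=
  (fst p) ^ 2 + (snd p - / INR n) ^ 2 = (/ INR n) ^ 2.

Definition hawaiian (p : pt) : Prop :=
  exists n : nat, (1 <= n)%nat /\ in_circle n p.

Definition unit_I (x : R) : Prop := 0 <= x <= 1.

Definition cont_on_I (f : R -> pt) : Prop :=
  forall x, unit_I x -> forall eps, eps > 0 ->
    exists delta, delta > 0 /\
      forall y, unit_I y -> Rabs (y - x) < delta -> dist2 (f y) (f x) < eps.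

Definition cont_on_I2 (H : R -> R -> pt) : Prop :=
  forall s t, unit_I s -> unit_I t -> forall eps, eps > 0 ->
    exists delta, delta > 0 /\
      forall s' t', unit_I s' -> unit_I t' ->
        sqrt ((s' - s) ^ 2 + (t' - t) ^ 2) < delta ->
        dist2 (H s' t') (H s t) < eps.

Definition loop_in_X (f : R -> pt) : Prop :=
  cont_on_I f /\ (forall x, unit_I x -> hawaiian (f x)) /\
  f 0 = origin /\ f 1 = origin.

Definition homotopic_rel (f g : R -> pt) : Prop :=
  exists H : R -> R -> pt,
    cont_on_I2 H /\
    (forall s t, unit_I s -> unit_I t -> hawaiian (H s t)) /\
    (forall s, unit_I s -> H s 0 = f s) /\
    (forall s, unit_I s -> H s 1 = g s) /\
    (forall t, unit_I t -> H 0 t = f 0 /\ H 1 t = f 1).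

(* Cantor construction: left endpoint of the j-th (0-indexed, left to right)
   of the 2^m closed intervals of length 3^-m remaining after stage m. *)
Fixpoint cantor_left (m : nat) (j : nat) : R :=
  match m with
  | O => 0
  | S m' => cantor_left m' (Nat.div2 j) +
            (if Nat.odd j then 2 / 3 ^ (S m') else 0)
  end.

(* (c_n^i, d_n^i), n >= 1, 1 <= i <= 2^(n-1): middle third of the
   (i-1)-th interval of stage n-1. *)
Definition c_ni (n i : nat) : R := cantor_left (n - 1) (i - 1) + / 3 ^ n.
Definition d_ni (n i : nat) : R := cantor_left (n - 1) (i - 1) + 2 / 3 ^ n.

(* enumeration (a_k,b_k) = (c_n^i, d_n^i) where k = 2^(n-1) + i - 1,
   i.e. n = log2 k + 1 and i = k - 2^(n-1) + 1, for k >= 1 *)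
Definition stage_of (k : nat) : nat := S (Nat.log2 k).
Definition index_of (k : nat) : nat := S (k - 2 ^ Nat.log2 k).
Definition a_k (k : nat) : R := c_ni (stage_of k) (index_of k).
Definition b_k (k : nat) : R := d_ni (stage_of k) (index_of k).

Definition circ_pt (n : nat) (theta : R) : pt :=
  (/ INR n * cos (2 * PI * theta), / INR n * sin (2 * PI * theta) + / INR n).

Definition in_gap (x : R) (n : nat) : Prop :=
  (1 <= n)%nat /\ a_k n < x < b_k n.

Definition g_loop (x : R) : pt :=
  match excluded_middle_informative (exists n, in_gap x n) with
  | left H =>
      let n := proj1_sig (constructive_indefinite_description _ H) in
      circ_pt n ((x - a_k n) / (b_k n - a_k n) - / 4)
  | right _ => origin
  end.

Definition card_ge_c (A : R -> Prop) : Prop :=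
  exists h : R -> R, (forall r, A (h r)) /\
    (forall r1 r2, h r1 = h r2 -> r1 = r2).

Definition fibre (f : R -> pt) (p : pt) (x : R) : Prop := unit_I x /\ f x = p.

Definition c_loop (f : R -> pt) : Prop :=
  loop_in_X f /\ forall p, ~ card_ge_c (fibre f p).

(* Main.v *)
Require Import Defs.
From Stdlib Require Import Reals.
Open Scope R_scope.
From Stdlib Require Import Lra Psatz Lia Arith List Classical ClassicalEpsilon ZArith.
From Coquelicot Require Compactness.
Import ListNotations.

Close Scope R_scope.

Inductive vtx := V0 | VR (n : nat) | VL (n : nat).

Definition vtx_eq_dec (a b : vtx) : {a = b} + {a <> b}.
Proof. decide equality; apply Nat.eq_dec. Defined.

Definition st (S : list vtx) (v : vtx) : list vtx :=
  match S with
  | t :: r => if vtx_eq_dec v t then S else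
      match r with
      | u :: r' => if vtx_eq_dec v u then r else v :: S
      | [] => v :: S
      end
  | [] => [v]
  end.

Fixpoint NB (l : list vtx) : Prop :=
  match l with
  | a :: ((b :: r) as t) => a <> b /\ (match r with c :: _ => a <> c | [] => True end) /\ NB t
  | _ => True
  end.

Lemma NB_tail a l : NB (a :: l) -> NB l.
Proof. destruct l as [|b r]; simpl; tauto. Qed.

Lemma st_NB S v : NB S -> NB (st S v).
Proof.
  intros H. destruct S as [|t r]; simpl. exact I.
  destruct (vtx_eq_dec v t). exact H.
  destruct r as [|u r'].
  - simpl; auto.
  - destruct (vtx_eq_dec v u). exact (NB_tail _ _ H).
    simpl in *. destruct r'; repeat split; tauto.
Qed.

Lemma st_top S v : exists r, st S v = v :: r.
Proof.
  destruct S as [|t r]; simpl. eauto.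
  destruct (vtx_eq_dec v t). subst; eauto.
  destruct r as [|u r']. eauto.
  destruct (vtx_eq_dec v u). subst; eauto. eauto.
Qed.

Lemma st_same v r : st (v :: r) v = v :: r.
Proof. simpl. destruct (vtx_eq_dec v v); congruence. Qed.

Lemma st_xyx x r y : NB (x :: r) -> st (st (x :: r) y) x = x :: r.
Proof.
  intros H. destruct (vtx_eq_dec y x) as [->|Hyx].
  - rewrite st_same, st_same. reflexivity.
  - simpl. destruct (vtx_eq_dec y x); [congruence|].
    destruct r as [|u r'].
    + simpl. destruct (vtx_eq_dec x y); [congruence|].
      destruct (vtx_eq_dec x x); congruence.
    + destruct (vtx_eq_dec y u) as [->|Hyu].
      * simpl. destruct (vtx_eq_dec x u). simpl in H; tauto.
        destruct r' as [|c r'']. reflexivity.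
        destruct (vtx_eq_dec x c). simpl in H; tauto. reflexivity.
      * simpl. destruct (vtx_eq_dec x y); [congruence|].
        destruct (vtx_eq_dec x x); congruence.
Qed.

Lemma st_two S x y z a b : NB S -> (exists r, S = x :: r) ->
  (x = a \/ x = b) -> (y = a \/ y = b) -> (z = a \/ z = b) ->
  st (st S y) z = st S z.
Proof.
  intros HN [r ->] Hx Hy Hz.
  destruct (vtx_eq_dec y x) as [->|Hyx].
  - rewrite st_same. reflexivity.
  - assert (z = x \/ z = y) as [->| ->] by (destruct Hx, Hy, Hz; subst; try tauto; congruence).
    + rewrite st_xyx by exact HN. rewrite st_same. reflexivity.
    + destruct (st_top (x :: r) y) as [r' E]. rewrite E, st_same. reflexivity.
Qed.

Fixpoint stk (w : nat -> vtx) (j : nat) : list vtx :=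
  match j with
  | 0 => [w 0]
  | S j' => st (stk w j') (w (S j'))
  end.

Lemma stk_S w j : stk w (S j) = st (stk w j) (w (S j)).
Proof. reflexivity. Qed.

Lemma stk_NB w j : NB (stk w j).
Proof. induction j; simpl. exact I. apply st_NB; auto. Qed.

Lemma stk_top w j : exists r, stk w j = w j :: r.
Proof. destruct j; simpl. eauto. apply st_top. Qed.

Lemma stk_range w p q a b : p <= q ->
  (forall i, p <= i <= q -> w i = a \/ w i = b) ->
  stk w q = st (stk w p) (w q).
Proof.
  intros Hpq Hab. induction q as [|q IH].
  - assert (p = 0) by lia; subst. destruct (stk_top w 0) as [r E]. rewrite E, st_same; auto.
  - destruct (Nat.eq_dec p (S q)) as [->|Hne].
    + destruct (stk_top w (S q)) as [r E]. rewrite E, st_same; auto.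
    + simpl stk at 1. rewrite IH by (lia || (intros; apply Hab; lia)).
      apply st_two with (x := w p) (a := a) (b := b).
      apply stk_NB. apply stk_top. apply Hab; lia. apply Hab; lia. apply Hab; lia.
Qed.

Lemma stk_agree w w' n m : stk w n = stk w' n -> (forall i, n < i <= m -> w i = w' i) ->
  n <= m -> stk w m = stk w' m.
Proof.
  intros H0 Hw Hnm. induction m as [|m IH].
  - assert (n = 0) by lia; subst; auto.
  - destruct (Nat.eq_dec n (S m)) as [->|Hne]; auto.
    simpl. rewrite IH; [| intros; apply Hw; lia | lia]. rewrite Hw by lia. reflexivity.
Qed.

Definition interp (p q : nat -> vtx) (j : nat) (i : nat) : vtx :=
  if i <=? j then q i else p (i - 1).

Lemma row_invariance (p q : nat -> vtx) M :
  p 0 = q 0 -> p M = q M ->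
  (forall j, j < M -> exists a b,
     (p j = a \/ p j = b) /\ (p (S j) = a \/ p (S j) = b) /\
     (q j = a \/ q j = b) /\ (q (S j) = a \/ q (S j) = b)) ->
  stk p M = stk q M.
Proof.
  intros H0 HM Hsq.
  assert (E0 : forall i, stk (interp p q 0) (S i) = stk p i).
  { induction i.
    - simpl. unfold interp. simpl. rewrite H0. destruct (vtx_eq_dec (q 0) (q 0)); congruence.
    - rewrite stk_S, IHi. unfold interp. simpl. replace (i - 0) with i by lia. reflexivity. }
  assert (EM : stk (interp p q M) (S M) = stk q M).
  { assert (forall i, i <= M -> stk (interp p q M) i = stk q i).
    { induction i; intros Hi. unfold interp; simpl; reflexivity.
      rewrite !stk_S, IHi by lia. unfold interp. destruct (S i <=? M) eqn:E. reflexivity.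
      apply Nat.leb_gt in E; lia. }
    rewrite stk_S, H by lia. unfold interp.
    destruct (S M <=? M) eqn:E. apply Nat.leb_le in E; lia.
    replace (S M - 1) with M by lia. rewrite HM.
    destruct (stk_top q M) as [r Er]. rewrite Er, st_same. reflexivity. }
  assert (Step : forall j, j < M -> stk (interp p q j) (S M) = stk (interp p q (S j)) (S M)).
  { intros j Hj. destruct (Hsq j Hj) as (a & b & Ha1 & Ha2 & Ha3 & Ha4).
    apply stk_agree with (n := S (S j)); [| | lia].
    - assert (Ej : stk (interp p q j) j = stk q j /\ stk (interp p q (S j)) j = stk q j).
      { assert (forall i k, i <= k -> stk (interp p q k) i = stk q i).
        { induction i; intros k Hk. unfold interp; simpl; reflexivity.
          rewrite !stk_S, IHi by lia. unfold interp. destruct (S i <=? k) eqn:E. reflexivity.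
          apply Nat.leb_gt in E; lia. }
        split; apply H; lia. }
      destruct Ej as [E1 E2].
      rewrite !stk_S, E1, E2. unfold interp.
      replace (S j <=? j) with false by (symmetry; apply Nat.leb_gt; lia).
      replace (S (S j) <=? j) with false by (symmetry; apply Nat.leb_gt; lia).
      replace (S j <=? S j) with true by (symmetry; apply Nat.leb_le; lia).
      replace (S (S j) <=? S j) with false by (symmetry; apply Nat.leb_gt; lia).
      replace (S j - 1) with j by lia. replace (S (S j) - 1) with (S j) by lia.
      rewrite (st_two _ (q j) (p j) (p (S j)) a b); auto using stk_NB, stk_top.
      rewrite (st_two _ (q j) (q (S j)) (p (S j)) a b); auto using stk_NB, stk_top.
    - intros i Hi. unfold interp.
      replace (i <=? j) with false by (symmetry; apply Nat.leb_gt; lia).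
      replace (i <=? S j) with false by (symmetry; apply Nat.leb_gt; lia). reflexivity. }
  assert (forall j, j <= M -> stk (interp p q j) (S M) = stk p M).
  { induction j; intros Hj. apply E0. rewrite <- Step by lia. apply IHj; lia. }
  rewrite <- (H M) by lia. exact EM.
Qed.

Definition suff (P S : list vtx) := exists X, S = X ++ P.

Lemma suff_refl P : suff P P.
Proof. exists []; reflexivity. Qed.

Lemma suff_trans A B C : suff A B -> suff B C -> suff A C.
Proof. intros [X ->] [Y ->]. exists (Y ++ X). rewrite app_assoc; reflexivity. Qed.

Lemma suff_cons A a B : suff A B -> suff A (a :: B).
Proof. intros [X ->]. exists (a :: X). reflexivity. Qed.

Lemma suff_len A B : suff A B -> length A <= length B.
Proof. intros [X ->]. rewrite length_app. lia. Qed.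

Lemma suff_comp A B S : suff A S -> suff B S -> length A <= length B -> suff A B.
Proof.
  intros [X HX] [Y HY] Hl. rewrite HX in HY.
  apply app_eq_app in HY as [l' [[H1 H2]|[H1 H2]]].
  - exists l'. exact H2.
  - subst A. rewrite length_app in Hl. destruct l'; simpl in Hl; [|lia].
    simpl. apply suff_refl.
Qed.

Lemma suff_eq_len A B : suff A B -> length A = length B -> A = B.
Proof. intros [X ->] H. rewrite length_app in H. destruct X; simpl in *; [reflexivity|lia]. Qed.

Lemma reach w i P : suff P (stk w i) -> P <> [] -> exists i', i' <= i /\ stk w i' = P.
Proof.
  induction i as [|i IH]; intros [X HX] HP.
  - exists 0. split; [lia|]. simpl in HX. destruct X as [|x X']. simpl in HX; auto.
    simpl in HX. inversion HX. destruct X', P; simpl in *; congruence.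
  - destruct X as [|x X']. exists (S i); split; [lia|]; auto.
    rewrite stk_S in HX. unfold st in HX.
    destruct (stk w i) as [|t r] eqn:E.
    + simpl in HX. inversion HX. destruct X', P; simpl in *; congruence.
    + destruct (vtx_eq_dec (w (S i)) t).
      * destruct (IH (ex_intro _ (x :: X') HX) HP) as [i' [? ?]]. exists i'; split; [lia|auto].
      * destruct r as [|u r'].
        -- inversion HX. destruct (IH (ex_intro _ X' H1) HP) as [i' [? ?]]. exists i'; split; [lia|auto].
        -- destruct (vtx_eq_dec (w (S i)) u).
           ++ assert (suff P (t :: u :: r')) by (exists (t :: x :: X'); rewrite HX; reflexivity).
              destruct (IH H HP) as [i' [? ?]]. exists i'; split; [lia|auto].
           ++ inversion HX. destruct (IH (ex_intro _ X' H1) HP) as [i' [? ?]]. exists i'; split; [lia|auto].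
Qed.

Definition first_hit w P i := stk w i = P /\ forall i', i' < i -> stk w i' <> P.

Lemma first_hit_ex w P i : stk w i = P -> exists i0, first_hit w P i0.
Proof.
  revert i. induction i as [i IH] using lt_wf_ind. intros Hi.
  destruct (classic (exists i', i' < i /\ stk w i' = P)) as [[i' [Hlt He]]|Hn].
  - exact (IH i' Hlt He).
  - exists i. split; auto. intros i' Hi' He. apply Hn; eauto.
Qed.

Lemma first_hit_ex_suff w P i : suff P (stk w i) -> P <> [] -> exists i0, i0 <= i /\ first_hit w P i0.
Proof.
  intros H1 H2. destruct (reach w i P H1 H2) as [i' [Hle He]].
  destruct (first_hit_ex w P i' He) as [i0 Hf]. exists i0. split; auto.
  destruct (le_lt_dec i0 i') as [|Hlt]; [lia|]. exfalso. apply (proj2 Hf i' Hlt He).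
Qed.

Lemma first_hit_mono w P Q i j : first_hit w P i -> stk w j = Q -> suff P Q -> P <> [] -> i <= j.
Proof.
  intros [H1 H2] H3 H4 H5. subst Q. destruct (reach w j P H4 H5) as [i' [Hle He]].
  destruct (le_lt_dec i i') as [|Hlt]; [lia|]. exfalso. exact (H2 i' Hlt He).
Qed.

Lemma first_hit_push w a P' i : first_hit w (a :: P') i -> P' <> [] ->
  exists i1, i = S i1 /\ stk w i1 = P' /\ w i = a.
Proof.
  intros [H1 H2] HP. destruct i as [|i1].
  - exfalso. simpl in H1. inversion H1. subst. apply HP; reflexivity.
  - exists i1. split; auto. rewrite stk_S in H1. unfold st in H1.
    destruct (stk w i1) as [|t r] eqn:E.
    + exfalso. inversion H1. subst. apply HP; reflexivity.
    + destruct (vtx_eq_dec (w (S i1)) t).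
      * exfalso. apply (H2 i1); [lia|]. rewrite E; exact H1.
      * destruct r as [|u r'].
        -- inversion H1; auto.
        -- destruct (vtx_eq_dec (w (S i1)) u).
           ++ exfalso. assert (suff (a :: P') (stk w i1)) by (rewrite E, H1; exists [t]; reflexivity).
              destruct (reach w i1 _ H ltac:(congruence)) as [i' [Hle He]].
              apply (H2 i'); [lia|auto].
           ++ inversion H1; auto.
Qed.

Lemma first_hit_unique w P i i' : first_hit w P i -> first_hit w P i' -> i = i'.
Proof.
  intros [H1 H2] [H3 H4]. destruct (lt_eq_lt_dec i i') as [[Hl|He]|Hg]; auto.
  - exfalso. exact (H4 i Hl H1).
  - exfalso. exact (H2 i' Hg H3).
Qed.

Lemma suff_same_len_head a b P S : suff (a :: P) S -> suff (b :: P) S -> a = b.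
Proof.
  intros H1 H2. assert (E : a :: P = b :: P).
  { apply suff_eq_len. apply (suff_comp _ _ S); auto. all: simpl; lia. }
  inversion E; auto.
Qed.

Open Scope R_scope.

Lemma sep r1 r2 xp yp xq yq l : 0 < r2 < r1 -> 0 < l ->
  xp^2 + yp^2 = 2*yp*r1 -> xq^2+yq^2 = 2*yq*r2 ->
  Rabs (xp - xq) < l -> Rabs (yp - yq) < l -> yq * (r1 - r2) <= 2*l*r1 + l^2.
Proof.
  intros Hr Hl Hp Hq Hx Hy.
  assert (Hxq : xq^2 <= r2^2) by (pose proof (pow2_ge_0 (yq - r2)); nra).
  assert (Hyq : 0 <= yq <= 2*r2) by (pose proof (pow2_ge_0 xq); nra).
  apply Rabs_def2 in Hx. apply Rabs_def2 in Hy.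
  assert (Hxq' : -r2 <= xq <= r2).
  { destruct (Rle_dec 0 xq); split; nra. }
  assert (E : 2*yq*(r1-r2) = 2*(xq*(xp-xq) + (yq - r1)*(yp-yq)) + ((xp-xq)^2+(yp-yq)^2)) by nra.
  assert (xq*(xp-xq) <= r1 * l).
  { destruct (Rle_dec 0 xq); destruct (Rle_dec 0 (xp-xq)); nra. }
  assert ((yq - r1)*(yp-yq) <= r1 * l).
  { destruct (Rle_dec 0 (yq-r1)); destruct (Rle_dec 0 (yp-yq)); nra. }
  assert ((xp-xq)^2 <= l^2) by nra.
  assert ((yp-yq)^2 <= l^2) by nra.
  nra.
Qed.

Lemma dist2_sym p q : dist2 p q = dist2 q p.
Proof. unfold dist2. f_equal. ring. Qed.

Lemma dist2_ge_x p q : Rabs (fst p - fst q) <= dist2 p q.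
Proof.
  unfold dist2. rewrite <- sqrt_Rsqr_abs. apply sqrt_le_1_alt.
  unfold Rsqr. pose proof (pow2_ge_0 (snd p - snd q)). nra.
Qed.

Lemma dist2_ge_y p q : Rabs (snd p - snd q) <= dist2 p q.
Proof.
  unfold dist2. rewrite <- sqrt_Rsqr_abs. apply sqrt_le_1_alt.
  unfold Rsqr. pose proof (pow2_ge_0 (fst p - fst q)). nra.
Qed.

Lemma sqrt_sum_le a b : sqrt (a^2 + b^2) <= Rabs a + Rabs b.
Proof.
  rewrite <- (sqrt_Rsqr (Rabs a + Rabs b)) by (pose proof (Rabs_pos a); pose proof (Rabs_pos b); lra).
  apply sqrt_le_1_alt. unfold Rsqr.
  assert (a^2 = Rabs a * Rabs a) by (rewrite <- Rabs_mult; rewrite Rabs_right; [ring|]; nra).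
  assert (b^2 = Rabs b * Rabs b) by (rewrite <- Rabs_mult; rewrite Rabs_right; [ring|]; nra).
  pose proof (Rabs_pos a); pose proof (Rabs_pos b). nra.
Qed.

Lemma dist2_le p q : dist2 p q <= Rabs (fst p - fst q) + Rabs (snd p - snd q).
Proof. apply sqrt_sum_le. Qed.

Lemma dist2_pos p q : 0 <= dist2 p q.
Proof. apply sqrt_pos. Qed.

Lemma dist2_zero p q : dist2 p q = 0 -> p = q.
Proof.
  intros H. pose proof (dist2_ge_x p q). pose proof (dist2_ge_y p q).
  destruct p as [a b], q as [c d]; simpl in *.
  assert (a = c) by (destruct (Rcase_abs (a - c)); [rewrite Rabs_left in H0|rewrite Rabs_right in H0]; lra).
  assert (b = d) by (destruct (Rcase_abs (b - d)); [rewrite Rabs_left in H1|rewrite Rabs_right in H1]; lra).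
  subst; reflexivity.
Qed.

Lemma dist2_tri p q r : dist2 p r <= dist2 p q + dist2 q r.
Proof.
  unfold dist2. destruct p as [a b], q as [c d], r as [e f]; cbn [fst snd].
  set (u1 := a - c). set (u2 := b - d). set (v1 := c - e). set (v2 := d - f).
  replace (a - e) with (u1 + v1) by (unfold u1, v1; ring).
  replace (b - f) with (u2 + v2) by (unfold u2, v2; ring).
  pose proof (sqrt_pos (u1^2+u2^2)). pose proof (sqrt_pos (v1^2+v2^2)).
  rewrite <- (sqrt_Rsqr (sqrt (u1 ^ 2 + u2 ^ 2) + sqrt (v1 ^ 2 + v2 ^ 2))) by lra.
  apply sqrt_le_1_alt. unfold Rsqr.
  assert (HA : sqrt (u1^2+u2^2) * sqrt (u1^2+u2^2) = u1^2+u2^2) by (apply sqrt_sqrt; nra).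
  assert (HB : sqrt (v1^2+v2^2) * sqrt (v1^2+v2^2) = v1^2+v2^2) by (apply sqrt_sqrt; nra).
  assert (HC : u1*v1 + u2*v2 <= sqrt (u1^2+u2^2) * sqrt (v1^2+v2^2)).
  { rewrite <- sqrt_mult by nra.
    destruct (Rle_dec (u1*v1+u2*v2) 0). pose proof (sqrt_pos ((u1 ^ 2 + u2 ^ 2) * (v1 ^ 2 + v2 ^ 2))); lra.
    rewrite <- (sqrt_Rsqr (u1*v1+u2*v2)) by lra. apply sqrt_le_1_alt. unfold Rsqr.
    pose proof (pow2_ge_0 (u1*v2 - u2*v1)). nra. }
  nra.
Qed.

Lemma INR_pos n : (1 <= n)%nat -> 0 < INR n.
Proof. intros. apply lt_0_INR. lia. Qed.

Lemma circ_eq n p : (1 <= n)%nat -> in_circle n p ->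
  (fst p)^2 + (snd p)^2 = 2 * snd p * / INR n.
Proof. unfold in_circle. intros. nra. Qed.

Lemma circ_bounds n p : (1 <= n)%nat -> in_circle n p ->
  0 <= snd p <= 2 * / INR n /\ (fst p)^2 <= (/INR n)^2.
Proof.
  intros Hn H. pose proof (circ_eq n p Hn H). pose proof (Rinv_0_lt_compat _ (INR_pos n Hn)).
  pose proof (pow2_ge_0 (fst p)). pose proof (pow2_ge_0 (snd p - / INR n)). split; [split|]; nra.
Qed.

Lemma circ_origin n : in_circle n origin.
Proof. unfold in_circle, origin; simpl. ring. Qed.

Lemma circ_y0 n p : (1 <= n)%nat -> in_circle n p -> snd p = 0 -> p = origin.
Proof.
  intros Hn H Hy. pose proof (circ_eq n p Hn H). rewrite Hy in H0.
  assert (fst p = 0) by nra. destruct p; simpl in *; subst; reflexivity.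
Qed.

Lemma circ_ypos n p : (1 <= n)%nat -> in_circle n p -> p <> origin -> 0 < snd p.
Proof.
  intros Hn H Hp. destruct (circ_bounds n p Hn H) as [[H1 _] _].
  destruct H1 as [H1|H1]; auto. exfalso. apply Hp. apply (circ_y0 n); auto.
Qed.

Lemma circ_unique n m p : (1 <= n)%nat -> (1 <= m)%nat -> in_circle n p -> in_circle m p ->
  p <> origin -> n = m.
Proof.
  intros Hn Hm H1 H2 Hp. pose proof (circ_ypos n p Hn H1 Hp).
  pose proof (circ_eq n p Hn H1). pose proof (circ_eq m p Hm H2).
  assert (/ INR n = / INR m) by nra.
  apply INR_eq. apply Rinv_eq_reg. exact H4.
Qed.

Definition star (N : nat) (v : vtx) (p : pt) : Prop :=
  match v with
  | V0 => p = origin \/ (exists n, (N < n)%nat /\ in_circle n p) \/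
          (exists n, (1 <= n <= N)%nat /\ in_circle n p /\ snd p < / INR n)
  | VR n => (1 <= n <= N)%nat /\ in_circle n p /\ ~ (fst p <= 0 /\ snd p <= / INR n)
  | VL n => (1 <= n <= N)%nat /\ in_circle n p /\ ~ (0 <= fst p /\ snd p <= / INR n)
  end.

Lemma star_VR_ne N n p : star N (VR n) p -> p <> origin.
Proof.
  intros [Hn [Hc Hx]] ->. apply Hx. unfold origin; simpl. split; [lra|].
  left. apply Rinv_0_lt_compat, INR_pos; lia.
Qed.

Lemma star_VL_ne N n p : star N (VL n) p -> p <> origin.
Proof.
  intros [Hn [Hc Hx]] ->. apply Hx. unfold origin; simpl. split; [lra|].
  left. apply Rinv_0_lt_compat, INR_pos; lia.
Qed.

Lemma star_origin N v : star N v origin -> v = V0.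
Proof.
  destruct v; auto; intros H.
  - exfalso; exact (star_VR_ne N n origin H eq_refl).
  - exfalso; exact (star_VL_ne N n origin H eq_refl).
Qed.

Lemma star_big N n p v : (N < n)%nat -> in_circle n p -> star N v p -> v = V0.
Proof.
  intros Hn Hc Hs. destruct (classic (p = origin)) as [->|Hp]. apply (star_origin N v Hs).
  destruct v; auto; destruct Hs as [Hm [Hc' _]];
  assert (n = n0) by (apply (circ_unique n n0 p); auto; lia); lia.
Qed.

Lemma star_RL N m p : star N (VR m) p -> star N (VL m) p -> snd p > / INR m.
Proof.
  intros [_ [_ H1]] [_ [_ H2]].
  destruct (Rle_dec (snd p) (/ INR m)); [|lra].
  exfalso. destruct (Rle_dec (fst p) 0); [apply H1|apply H2]; split; lra.
Qed.

Lemma simplex N p : hawaiian p -> exists a b, forall v, star N v p -> v = a \/ v = b.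
Proof.
  intros [n [Hn Hc]].
  destruct (classic (p = origin)) as [->|Hp].
  { exists V0, V0. intros v Hv. left. apply (star_origin N v Hv). }
  destruct (le_lt_dec n N) as [HnN|HnN].
  2:{ exists V0, V0. intros v Hv. left. apply (star_big N n p v HnN Hc Hv). }
  assert (Huniq : forall m, (1 <= m)%nat -> in_circle m p -> m = n)
    by (intros m Hm Hcm; apply (circ_unique m n p); auto).
  destruct (Rlt_dec (snd p) (/ INR n)) as [Hy|Hy].
  - destruct (Rle_dec (fst p) 0) as [Hx|Hx].
    + exists V0, (VL n). intros v Hv. destruct v as [|m|m]; auto.
      * exfalso. destruct Hv as [Hm [Hcm H]]. assert (m = n) by (apply Huniq; auto; lia). subst. apply H; lra.
      * right. destruct Hv as [Hm [Hcm H]]. f_equal. apply Huniq; auto; lia.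
    + exists V0, (VR n). intros v Hv. destruct v as [|m|m]; auto.
      * right. destruct Hv as [Hm [Hcm H]]. f_equal. apply Huniq; auto; lia.
      * exfalso. destruct Hv as [Hm [Hcm H]]. assert (m = n) by (apply Huniq; auto; lia). subst. apply H; lra.
  - exists (VR n), (VL n). intros v Hv. destruct v as [|m|m].
    + exfalso. destruct Hv as [H|[[m [Hm Hcm]]|[m [Hm [Hcm Hym]]]]]; [congruence| |].
      * assert (m = n) by (apply Huniq; auto; lia). lia.
      * assert (m = n) by (apply Huniq; auto; lia). subst. lra.
    + left. destruct Hv as [Hm [Hcm H]]. f_equal. apply Huniq; auto; lia.
    + right. destruct Hv as [Hm [Hcm H]]. f_equal. apply Huniq; auto; lia.
Qed.
Lemma arith_sep (K a b y L : R) : 1 <= K -> 1 <= a -> a + 1 <= b -> b <= 16*K -> y >= /(8*K) ->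
  L = /(1024 * K^2) -> y*(/a - /b) <= 2*L/a + L^2 -> False.
Proof.
  intros HK Ha Hb HbK Hy HL H.
  assert (E: y*(/a - /b) * (a*b) = y*(b-a)) by (field; lra).
  assert (E2: (2*L/a + L^2)*(a*b) = 2*L*b + L^2*a*b) by (field; lra).
  assert (H2 : y*(b-a) <= 2*L*b + L^2*a*b).
  { rewrite <- E, <- E2. apply Rmult_le_compat_r; nra. }
  assert (HLK : L * (1024*K^2) = 1) by (rewrite HL; field; lra).
  assert (HyK : y * (8*K) >= 1).
  { assert (/(8*K) * (8*K) = 1) by (field; lra). nra. }
  assert (0 < L) by (rewrite HL; apply Rinv_0_lt_compat; nra).
  assert (Hy0 : 0 < y) by (assert (0 < /(8*K)) by (apply Rinv_0_lt_compat; lra); lra).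
  assert (H3 : y <= y*(b-a)) by nra.
  assert (H4 : 2*L*b <= 32*K*L) by nra.
  assert (H5 : L^2*a*b <= L^2*256*K^2) by (assert (a*b <= 256*K^2) by nra; nra).
  assert (H6 : L^2*256*K^2 = L/4) by nra.
  assert (H7 : 32*K*L * (8*K) = /4 * (L * (1024*K^2))) by field.
  assert (H8 : (L/4) * (8*K) <= /4) by nra.
  nra.
Qed.
Lemma arith_top (r x y L y' : R) : 0 < L -> L <= r/1024 -> x^2 + y^2 = 2*y*r -> Rabs x <= L ->
  y >= r - L -> Rabs (y' - y) < L -> y' > r.
Proof.
  intros HL HLr Hc Hx Hy Hy'. apply Rabs_def2 in Hy'.
  assert (x^2 <= L^2). { destruct (Rcase_abs x); [rewrite Rabs_left in Hx|rewrite Rabs_right in Hx]; nra. }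
  assert (Hr : 0 < r) by lra.
  assert (Hy2 : y >= r/2) by lra.
  assert (y*(2*r - y) <= L^2) by nra.
  assert (2*r - y <= 2*L^2/r).
  { apply Rmult_le_reg_l with (r := y); [lra|].
    assert (y * (2*L^2/r) >= r/2 * (2*L^2/r)) by (apply Rmult_ge_compat_r; [|lra]; 
      apply Rle_ge; unfold Rdiv; apply Rmult_le_pos; [nra|left; apply Rinv_0_lt_compat; lra]).
    assert (r/2 * (2*L^2/r) = L^2) by (field; lra). nra. }
  assert (2*L^2/r <= L/512).
  { apply Rmult_le_reg_l with (r := r); [lra|]. replace (r * (2*L^2/r)) with (2*L^2) by (field; lra). nra. }
  lra.
Qed.

Lemma inv_le_inv a b : 0 < a -> a <= b -> / b <= / a.
Proof. intros. apply Rinv_le_contravar; auto. Qed.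

Lemma lebesgue N : (1 <= N)%nat -> exists l, 0 < l /\
  forall z, hawaiian z -> exists v, forall z', hawaiian z' -> dist2 z' z < l -> star N v z'.
Proof.
  intros HN. set (K := INR N). assert (HK : 1 <= K) by (unfold K; apply (le_INR 1); lia).
  set (L := / (1024 * K^2)).
  assert (HL : 0 < L) by (unfold L; apply Rinv_0_lt_compat; nra).
  assert (HLK : L * (1024 * K^2) = 1) by (unfold L; field; lra).
  assert (HLs : L <= / (1024 * K)).
  { unfold L. apply inv_le_inv; nra. }
  assert (HiK : 0 < / K) by (apply Rinv_0_lt_compat; lra).
  assert (HLs2 : L <= /K / 1024) by (unfold Rdiv; rewrite Rinv_mult in HLs; lra).
  exists L. split; auto.
  intros z [n [Hn Hc]]. destruct z as [x y].
  set (r := / INR n). assert (Hr : 0 < r) by (apply Rinv_0_lt_compat, INR_pos; auto).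
  pose proof (circ_eq n _ Hn Hc) as Hz. cbn [fst snd] in Hz. fold r in Hz.
  destruct (circ_bounds n _ Hn Hc) as [[Hy0 Hy2] Hx2]. cbn [fst snd] in *. fold r in Hy2, Hx2.
  assert (Hdist : forall z', dist2 z' (x, y) < L -> Rabs (fst z' - x) < L /\ Rabs (snd z' - y) < L).
  { intros z' Hd. pose proof (dist2_ge_x z' (x,y)). pose proof (dist2_ge_y z' (x,y)). simpl in *. split; lra. }
  destruct (Rlt_dec y (/ (4 * K))) as [HyA|HyB].
  -
    exists V0. intros z' [m [Hm Hcm]] Hd. destruct (Hdist z' Hd) as [_ Hdy].
    destruct (le_lt_dec m N) as [HmN|HmN].
    + right; right. exists m. split; [lia|]. split; auto.
      apply Rabs_def2 in Hdy.
      assert (/ K <= / INR m) by (apply inv_le_inv; [apply INR_pos; auto| unfold K; apply le_INR; auto]).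
      assert (/ (4*K) = /K / 4) by (field; lra).
      assert (/K/1024 <= /K) by lra. lra.
    + right; left. exists m; auto.
  - apply Rnot_lt_le in HyB.
    assert (HnK : INR n <= 8 * K).
    { assert (/(4*K) <= 2 * r) by lra. unfold r in H.
      assert (/(4*K) * (INR n * (4*K)) <= 2 * / INR n * (INR n * (4*K))).
      { apply Rmult_le_compat_r; auto. pose proof (INR_pos n Hn). nra. }
      replace (/(4*K) * (INR n * (4*K))) with (INR n) in H0 by (field; lra).
      replace (2 * / INR n * (INR n * (4*K))) with (8 * K) in H0 by (field; pose proof (INR_pos n Hn); lra).
      exact H0. }
    assert (Hnoout : forall z' m, (1 <= m)%nat -> (m < n)%nat -> in_circle m z' -> dist2 z' (x,y) < L -> False).
    { intros z' m Hm Hmn Hcm Hd. destruct (Hdist z' Hd) as [Hdx Hdy].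
      pose proof (circ_eq m z' Hm Hcm) as Hz'.
      assert (Hmn' : INR m + 1 <= INR n) by (rewrite <- S_INR; apply le_INR; lia).
      pose proof (sep (/ INR m) r (fst z') (snd z') x y L) as Hs.
      assert (Hs' : y * (/ INR m - r) <= 2 * L * / INR m + L^2).
      { apply Hs; auto.
        split; auto. unfold r. apply Rinv_lt_contravar. pose proof (INR_pos m Hm); pose proof (INR_pos n Hn); nra. lra. }
      apply (arith_sep K (INR m) (INR n) y L); auto.
      - apply (le_INR 1); lia.
      - lra.
      - apply Rle_ge. assert (/(8*K) <= /(4*K)) by (apply inv_le_inv; lra). lra.
      }
    destruct (le_lt_dec n N) as [HnN|HnN].
    +
      assert (HonC : forall z', hawaiian z' -> dist2 z' (x,y) < L -> in_circle n z').
      { intros z' [m [Hm Hcm]] Hd.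
        destruct (lt_eq_lt_dec m n) as [[Hlt|Heq]|Hgt]; [| subst; auto |].
        - exfalso; exact (Hnoout z' m Hm Hlt Hcm Hd).
        - exfalso. destruct (Hdist z' Hd) as [Hdx Hdy].
          pose proof (circ_eq m z' Hm Hcm) as Hz'.
          destruct (circ_bounds m z' Hm Hcm) as [[Hy0' Hy2'] _].
          apply Rabs_def2 in Hdy as Hdy'.
          assert (Hy' : snd z' >= /(8*K)).
          { assert (/(8*K) = /(4*K) - /(8*K)) by (field; lra).
            assert (L <= /(8*K)).
            { assert (/(1024*K) <= /(8*K)) by (apply inv_le_inv; lra). lra. }
            lra. }
          assert (HmK : INR m <= 16 * K).
          { assert (/(8*K) <= 2 * / INR m) by lra.
            assert (/(8*K) * (INR m * (8*K)) <= 2 * / INR m * (INR m * (8*K))).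
            { apply Rmult_le_compat_r; auto. pose proof (INR_pos m Hm). nra. }
            replace (/(8*K) * (INR m * (8*K))) with (INR m) in H0 by (field; lra).
            replace (2 * / INR m * (INR m * (8*K))) with (16 * K) in H0 by (field; pose proof (INR_pos m Hm); lra).
            exact H0. }
          assert (Hnm' : INR n + 1 <= INR m) by (rewrite <- S_INR; apply le_INR; lia).
          pose proof (sep r (/ INR m) x y (fst z') (snd z') L) as Hs.
          assert (Hs' : snd z' * (r - / INR m) <= 2 * L * r + L^2).
          { apply Hs; auto.
            split. apply Rinv_0_lt_compat, INR_pos; auto.
            unfold r. apply Rinv_lt_contravar. pose proof (INR_pos m Hm); pose proof (INR_pos n Hn); nra. lra.
            rewrite Rabs_minus_sym; auto. rewrite Rabs_minus_sym; auto. }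
          apply (arith_sep K (INR n) (INR m) (snd z') L); auto.
          all: try (apply (le_INR 1); lia). all: try (unfold r in Hs'; unfold Rdiv; lra). }
      assert (HrK : /K <= r) by (apply inv_le_inv; [apply INR_pos; auto|unfold K; apply le_INR; auto]).
      destruct (Rlt_dec y (r - L)) as [Hy1|Hy1].
      * exists V0. intros z' Hz' Hd. right; right. exists n. split; [lia|]. split; [apply HonC; auto|].
        destruct (Hdist z' Hd) as [_ Hdy]. apply Rabs_def2 in Hdy. fold r. lra.
      * destruct (Rlt_dec L x) as [Hx1|Hx1].
        -- exists (VR n). intros z' Hz' Hd. split; [lia|]. split; [apply HonC; auto|].
           destruct (Hdist z' Hd) as [Hdx _]. apply Rabs_def2 in Hdx. intros [? ?]. lra.
        -- destruct (Rlt_dec x (-L)) as [Hx2'|Hx2'].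
           ++ exists (VL n). intros z' Hz' Hd. split; [lia|]. split; [apply HonC; auto|].
              destruct (Hdist z' Hd) as [Hdx _]. apply Rabs_def2 in Hdx. intros [? ?]. lra.
           ++ exists (VR n). intros z' Hz' Hd. split; [lia|]. split; [apply HonC; auto|].
              destruct (Hdist z' Hd) as [_ Hdy].
              assert (snd z' > r).
              { apply (arith_top r x y L); auto. lra.
                unfold Rabs; destruct (Rcase_abs x); lra. lra. }
              fold r. intros [? ?]. lra.
    + exists V0. intros z' [m [Hm Hcm]] Hd. right.
      destruct (le_lt_dec m N) as [HmN|HmN].
      * exfalso. apply (Hnoout z' m Hm ltac:(lia) Hcm Hd).
      * left. exists m; auto.
Qed.

Open Scope R_scope.

Lemma pow3_pos m : 0 < 3 ^ m.
Proof. apply pow_lt; lra. Qed.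

Lemma inv3S m : / 3 ^ (S m) = / 3 ^ m / 3.
Proof. simpl. field. pose proof (pow3_pos m). lra. Qed.

Lemma inv3_pos m : 0 < / 3 ^ m.
Proof. apply Rinv_0_lt_compat, pow3_pos. Qed.

Lemma cl_S m j : cantor_left (S m) j =
  cantor_left m (Nat.div2 j) + (if Nat.odd j then 2 / 3 ^ (S m) else 0).
Proof. reflexivity. Qed.

Lemma div2_lt j m : (j < 2 ^ S m)%nat -> (Nat.div2 j < 2 ^ m)%nat.
Proof.
  intros H. rewrite Nat.pow_succ_r' in H.
  pose proof (Nat.div2_odd j). destruct (Nat.odd j); simpl in *; lia.
Qed.

Lemma cl_bounds m j : (j < 2 ^ m)%nat -> 0 <= cantor_left m j /\ cantor_left m j + / 3 ^ m <= 1.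
Proof.
  revert j. induction m as [|m IH]; intros j Hj.
  - simpl. lra.
  - rewrite cl_S. destruct (IH (Nat.div2 j) (div2_lt j m Hj)) as [H1 H2].
    rewrite inv3S in *. pose proof (inv3_pos m).
    assert (E : 2 / 3 ^ S m = 2 * (/ 3 ^ m / 3)) by (rewrite <- inv3S; unfold Rdiv; ring).
    destruct (Nat.odd j); rewrite ?E; split; lra.
Qed.

Lemma cl_nest m j : cantor_left m (Nat.div2 j) <= cantor_left (S m) j /\
  cantor_left (S m) j + / 3 ^ (S m) <= cantor_left m (Nat.div2 j) + / 3 ^ m.
Proof.
  rewrite cl_S, inv3S. pose proof (inv3_pos m).
  assert (E : 2 / 3 ^ S m = 2 * (/ 3 ^ m / 3)) by (rewrite <- inv3S; unfold Rdiv; ring).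
  destruct (Nat.odd j); rewrite ?E; split; lra.
Qed.

Lemma cl_sep m j j' : (j < j')%nat -> (j' < 2 ^ m)%nat ->
  cantor_left m j + 2 / 3 ^ m <= cantor_left m j'.
Proof.
  revert j j'. induction m as [|m IH]; intros j j' Hjj' Hj'.
  - simpl in Hj'. lia.
  - rewrite !cl_S. pose proof (inv3_pos m).
    assert (E : 2 / 3 ^ S m = 2 * (/ 3 ^ m / 3)) by (rewrite <- inv3S; unfold Rdiv; ring).
    rewrite E.
    pose proof (Nat.div2_odd j) as Ej. pose proof (Nat.div2_odd j') as Ej'.
    assert (Hle : (Nat.div2 j <= Nat.div2 j')%nat) by (apply Nat.div2_le_mono; lia).
    destruct (Nat.eq_dec (Nat.div2 j) (Nat.div2 j')) as [Heq|Hne].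
    + rewrite Heq. destruct (Nat.odd j) eqn:Oj, (Nat.odd j') eqn:Oj'; simpl in *; try lia; lra.
    + assert (IH' := IH (Nat.div2 j) (Nat.div2 j') ltac:(lia) (div2_lt j' m Hj')).
      destruct (Nat.odd j), (Nat.odd j'); unfold Rdiv in *; lra.
Qed.

Lemma cl_int m j : exists c : nat, cantor_left m j = INR c / 3 ^ m.
Proof.
  revert j. induction m as [|m IH]; intros j.
  - exists 0%nat. simpl. lra.
  - rewrite cl_S. destruct (IH (Nat.div2 j)) as [c Hc]. rewrite Hc.
    exists (3 * c + (if Nat.odd j then 2 else 0))%nat. rewrite plus_INR, mult_INR.
    simpl pow. destruct (Nat.odd j); simpl INR; field; pose proof (pow3_pos m); lra.
Qed.

Lemma cl_anc d n j : cantor_left n (j / 2 ^ d) <= cantor_left (d + n) j /\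
  cantor_left (d + n) j + / 3 ^ (d + n) <= cantor_left n (j / 2 ^ d) + / 3 ^ n.
Proof.
  revert j. induction d as [|d IH]; intros j.
  - rewrite Nat.pow_0_r, Nat.div_1_r. simpl plus. lra.
  - destruct (cl_nest (d + n) j) as [H1 H2].
    destruct (IH (Nat.div2 j)) as [H3 H4].
    replace (j / 2 ^ S d)%nat with (Nat.div2 j / 2 ^ d)%nat.
    2:{ rewrite Nat.div2_div. rewrite Nat.Div0.div_div by (try lia; apply Nat.pow_nonzero; lia).
        rewrite Nat.pow_succ_r'. reflexivity. }
    simpl plus. split; lra.
Qed.

Definition lg (k : nat) := Nat.log2 k.
Definition gJ (k : nat) := (k - 2 ^ Nat.log2 k)%nat.

Lemma a_k_eq k : a_k k = cantor_left (lg k) (gJ k) + / 3 ^ (S (lg k)).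
Proof. unfold a_k, c_ni, stage_of, index_of, lg, gJ. simpl. rewrite !Nat.sub_0_r. reflexivity. Qed.
Lemma b_k_eq k : b_k k = cantor_left (lg k) (gJ k) + 2 / 3 ^ (S (lg k)).
Proof. unfold b_k, d_ni, stage_of, index_of, lg, gJ. simpl. rewrite !Nat.sub_0_r. reflexivity. Qed.

Lemma gJ_lt k : (1 <= k)%nat -> (gJ k < 2 ^ lg k)%nat.
Proof.
  intros Hk. unfold gJ, lg. destruct (Nat.log2_spec k ltac:(lia)) as [H1 H2].
  rewrite Nat.pow_succ_r' in H2. lia.
Qed.

Lemma k_decomp k : (1 <= k)%nat -> k = (2 ^ lg k + gJ k)%nat.
Proof.
  intros Hk. unfold gJ, lg. destruct (Nat.log2_spec k ltac:(lia)) as [H1 H2]. lia.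
Qed.

Lemma gap_in_parent k s : (1 <= k)%nat -> a_k k < s < b_k k ->
  cantor_left (lg k) (gJ k) < s < cantor_left (lg k) (gJ k) + / 3 ^ (lg k).
Proof.
  intros Hk. rewrite a_k_eq, b_k_eq, inv3S. pose proof (inv3_pos (lg k)).
  assert (E : 2 / 3 ^ S (lg k) = 2 * (/ 3 ^ (lg k) / 3)) by (rewrite <- inv3S; unfold Rdiv; ring).
  rewrite E. lra.
Qed.

Lemma ab_lt k : a_k k < b_k k.
Proof. rewrite a_k_eq, b_k_eq. pose proof (inv3_pos (S (lg k))). unfold Rdiv. lra. Qed.

Lemma interval_avoids_gap k d j s : (1 <= k)%nat -> (j < 2 ^ (d + S (lg k)))%nat ->
  cantor_left (d + S (lg k)) j <= s <= cantor_left (d + S (lg k)) j + / 3 ^ (d + S (lg k)) ->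
  ~ (a_k k < s < b_k k).
Proof.
  intros Hk Hj Hs Hg. set (n := lg k) in *. set (J := gJ k) in *.
  destruct (cl_anc d (S n) j) as [H1 H2].
  set (j1 := (j / 2 ^ d)%nat) in *.
  assert (Hj1 : (j1 < 2 ^ S n)%nat).
  { unfold j1. apply Nat.Div0.div_lt_upper_bound. rewrite <- Nat.pow_add_r. replace (S n + d)%nat with (d + S n)%nat by lia. exact Hj. }
  assert (Hs1 : cantor_left (S n) j1 <= s <= cantor_left (S n) j1 + / 3 ^ S n) by lra.
  clear H1 H2 Hs.
  rewrite cl_S in Hs1. rewrite a_k_eq, b_k_eq in Hg. fold n J in Hg.
  pose proof (inv3_pos n). rewrite inv3S in *.
  assert (E : 2 / 3 ^ S n = 2 * (/ 3 ^ n / 3)) by (rewrite <- inv3S; unfold Rdiv; ring).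
  rewrite E in *.
  destruct (lt_eq_lt_dec (Nat.div2 j1) J) as [[Hlt|Heq]|Hgt].
  - pose proof (cl_sep n _ _ Hlt (gJ_lt k Hk)). fold J in H0. destruct (Nat.odd j1); lra.
  - rewrite Heq in Hs1. destruct (Nat.odd j1); lra.
  - pose proof (cl_sep n _ _ Hgt (div2_lt j1 n Hj1)). destruct (Nat.odd j1); lra.
Qed.

Lemma gap_disjoint k k' s : (1 <= k)%nat -> (1 <= k')%nat ->
  a_k k < s < b_k k -> a_k k' < s < b_k k' -> k = k'.
Proof.
  intros Hk Hk' H H'.
  assert (Hgen : forall k k', (1 <= k)%nat -> (1 <= k')%nat -> (lg k < lg k')%nat ->
     a_k k < s < b_k k -> a_k k' < s < b_k k' -> False).
  { clear. intros k k' Hk Hk' Hlt H H'.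
    pose proof (gap_in_parent k' s Hk' H') as Hp.
    apply (interval_avoids_gap k (lg k' - S (lg k)) (gJ k') s Hk).
    - replace (lg k' - S (lg k) + S (lg k))%nat with (lg k') by lia. apply gJ_lt; auto.
    - replace (lg k' - S (lg k) + S (lg k))%nat with (lg k') by lia. lra.
    - exact H. }
  destruct (lt_eq_lt_dec (lg k) (lg k')) as [[Hlt|Heq]|Hgt].
  - exfalso; exact (Hgen k k' Hk Hk' Hlt H H').
  - pose proof (gap_in_parent k s Hk H). pose proof (gap_in_parent k' s Hk' H').
    rewrite <- Heq in H1.
    destruct (lt_eq_lt_dec (gJ k) (gJ k')) as [[Hlt2|Heq2]|Hgt2].
    + exfalso. pose proof (cl_sep (lg k) _ _ Hlt2 ltac:(rewrite Heq; apply gJ_lt; auto)).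
      pose proof (inv3_pos (lg k)). unfold Rdiv in *. lra.
    + rewrite (k_decomp k Hk), (k_decomp k' Hk'). rewrite Heq, Heq2. reflexivity.
    + exfalso. pose proof (cl_sep (lg k) _ _ Hgt2 ltac:(apply gJ_lt; auto)).
      pose proof (inv3_pos (lg k)). unfold Rdiv in *. lra.
  - exfalso; exact (Hgen k' k Hk' Hk Hgt H' H).
Qed.

Lemma gap_in_01 k : (1 <= k)%nat -> 0 <= a_k k /\ b_k k <= 1.
Proof.
  intros Hk. rewrite a_k_eq, b_k_eq. destruct (cl_bounds _ _ (gJ_lt k Hk)).
  pose proof (inv3_pos (lg k)). rewrite inv3S.
  assert (E : 2 / 3 ^ S (lg k) = 2 * (/ 3 ^ (lg k) / 3)) by (rewrite <- inv3S; unfold Rdiv; ring).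
  rewrite E. unfold Rdiv. split; lra.
Qed.

Fixpoint jb (be : nat -> bool) (m : nat) : nat :=
  match m with 0 => 0%nat | S m' => (2 * jb be m' + (if be m' then 1 else 0))%nat end.

Lemma jb_lt be m : (jb be m < 2 ^ m)%nat.
Proof. induction m; simpl; [lia|]. destruct (be m); lia. Qed.

Lemma jb_S be m : jb be (S m) = (2 * jb be m + (if be m then 1 else 0))%nat.
Proof. reflexivity. Qed.

Lemma jb_div2 be m : Nat.div2 (jb be (S m)) = jb be m.
Proof.
  rewrite jb_S. destruct (be m).
  - replace (2 * jb be m + 1)%nat with (S (2 * jb be m)) by lia. apply Nat.div2_succ_double.
  - rewrite Nat.add_0_r. apply Nat.div2_double.
Qed.

Lemma jb_odd be m : Nat.odd (jb be (S m)) = be m.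
Proof.
  rewrite jb_S. destruct (be m).
  - replace (2 * jb be m + 1)%nat with (S (2 * jb be m)) by lia. rewrite Nat.odd_succ, Nat.even_mul. reflexivity.
  - rewrite Nat.add_0_r, Nat.odd_mul. reflexivity.
Qed.

Definition u (be : nat -> bool) (m : nat) : R := cantor_left m (jb be m).

Lemma u_S be m : u be (S m) = u be m + (if be m then 2 / 3 ^ (S m) else 0).
Proof. unfold u. rewrite cl_S, jb_div2, jb_odd. reflexivity. Qed.

Lemma u_nest be m : u be m <= u be (S m) /\ u be (S m) + / 3 ^ (S m) <= u be m + / 3 ^ m.
Proof. unfold u. rewrite <- (jb_div2 be m). apply cl_nest. Qed.

Lemma u_mono be m d : u be m <= u be (d + m) /\ u be (d + m) + / 3 ^ (d + m) <= u be m + / 3 ^ m.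
Proof.
  induction d; simpl plus. lra. destruct (u_nest be (d + m)). lra.
Qed.

Lemma u_bnd be m : 0 <= u be m /\ u be m + / 3 ^ m <= 1.
Proof. apply cl_bounds, jb_lt. Qed.

Definition xset (be : nat -> bool) (r : R) : Prop := exists m, r = u be m.

Lemma xset_bound be : bound (xset be).
Proof. exists 1. intros r [m ->]. pose proof (u_bnd be m). pose proof (inv3_pos m). lra. Qed.

Lemma xset_ne be : exists r, xset be r.
Proof. exists (u be 0). exists 0%nat. reflexivity. Qed.

Definition xpt (be : nat -> bool) : R := proj1_sig (completeness (xset be) (xset_bound be) (xset_ne be)).

Lemma xpt_bounds be m : u be m <= xpt be <= u be m + / 3 ^ m.
Proof.
  unfold xpt. destruct (completeness _ _ _) as [x [Hub Hlub]]. simpl. split.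
  - apply Hub. exists m; reflexivity.
  - apply Hlub. intros r [m' ->].
    destruct (le_lt_dec m m') as [Hle|Hlt].
    + destruct (u_mono be m (m' - m)) as [_ H]. replace (m' - m + m)%nat with m' in H by lia.
      pose proof (inv3_pos m'). lra.
    + destruct (u_mono be m' (m - m')) as [H _]. replace (m - m' + m')%nat with m in H by lia.
      pose proof (inv3_pos m). lra.
Qed.

Lemma xpt_01 be : 0 <= xpt be <= 1.
Proof. pose proof (xpt_bounds be 0). pose proof (u_bnd be 0). pose proof (inv3_pos 0). lra. Qed.

Lemma xpt_not_gap be k : (1 <= k)%nat -> ~ (a_k k < xpt be < b_k k).
Proof.
  intros Hk. apply (interval_avoids_gap k 0 (jb be (S (lg k)))); auto.
  - simpl plus. apply jb_lt.
  - simpl plus. pose proof (xpt_bounds be (S (lg k))). unfold u in H. exact H.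
Qed.

Lemma jb_agree be be' m : (forall i, (i < m)%nat -> be i = be' i) -> jb be m = jb be' m.
Proof. induction m; intros H; simpl; auto. rewrite IHm by (intros; apply H; lia). rewrite H by lia. reflexivity. Qed.

Lemma xpt_sep be be' m0 : (forall i, (i < m0)%nat -> be i = be' i) -> be m0 = false -> be' m0 = true ->
  let k := (2 ^ m0 + jb be m0)%nat in (1 <= k)%nat /\ xpt be <= a_k k /\ b_k k <= xpt be'.
Proof.
  intros Hag H0 H1 k.
  assert (Hk : (1 <= k)%nat) by (unfold k; pose proof (Nat.pow_nonzero 2 m0); lia).
  assert (Hlg : lg k = m0).
  { unfold lg, k. apply Nat.log2_unique; [lia|]. pose proof (jb_lt be m0). rewrite Nat.pow_succ_r'. lia. }
  assert (HJ : gJ k = jb be m0) by (unfold gJ; fold (lg k); rewrite Hlg; unfold k; lia).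
  split; auto. rewrite a_k_eq, b_k_eq, Hlg, HJ. split.
  - pose proof (xpt_bounds be (S m0)). rewrite u_S, H0 in H. unfold u in H. lra.
  - pose proof (xpt_bounds be' (S m0)). rewrite u_S, H1 in H. unfold u in H.
    rewrite (jb_agree be be' m0 Hag). lra.
Qed.

Open Scope R_scope.

Lemma gE k s : (1 <= k)%nat -> a_k k < s < b_k k ->
  g_loop s = circ_pt k ((s - a_k k) / (b_k k - a_k k) - / 4).
Proof.
  intros Hk Hs. unfold g_loop. destruct (excluded_middle_informative _) as [H|H].
  - destruct (constructive_indefinite_description _ H) as [n [Hn Hg]]. simpl.
    assert (n = k) by (apply (gap_disjoint n k s); auto). subst. reflexivity.
  - exfalso. apply H. exists k. split; auto.
Qed.

Lemma g0 s : (forall k, (1 <= k)%nat -> ~ (a_k k < s < b_k k)) -> g_loop s = origin.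
Proof.
  intros H. unfold g_loop. destruct (excluded_middle_informative _) as [[n [Hn Hg]]|_]; auto.
  exfalso. exact (H n Hn Hg).
Qed.

Lemma circ_pt_in k th : (1 <= k)%nat -> in_circle k (circ_pt k th).
Proof.
  intros Hk. unfold in_circle, circ_pt; simpl.
  pose proof (sin2_cos2 (2 * PI * th)). unfold Rsqr in H. nra.
Qed.

Lemma circ_pt_xy k ph : circ_pt k (ph - / 4) =
  (/ INR k * sin (2 * PI * ph), / INR k * (1 - cos (2 * PI * ph))).
Proof.
  unfold circ_pt. replace (2 * PI * (ph - / 4)) with (2 * PI * ph - PI / 2) by field.
  rewrite cos_minus, sin_minus, cos_PI2, sin_PI2. f_equal; ring.
Qed.

Lemma star_onC N k p v : (1 <= k <= N)%nat -> in_circle k p -> p <> origin -> star N v p ->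
  (v = V0 /\ snd p < / INR k) \/ (v = VR k /\ ~ (fst p <= 0 /\ snd p <= / INR k)) \/
  (v = VL k /\ ~ (0 <= fst p /\ snd p <= / INR k)).
Proof.
  intros Hk Hc Hp Hs. destruct v as [|m|m].
  - left. split; auto. destruct Hs as [H|[[m [Hm Hcm]]|[m [Hm [Hcm Hy]]]]]; [congruence| |].
    + assert (m = k) by (apply (circ_unique m k p); auto; lia). lia.
    + assert (m = k) by (apply (circ_unique m k p); auto; lia). subst; auto.
  - right; left. destruct Hs as [Hm [Hcm H]]. assert (m = k) by (apply (circ_unique m k p); auto; lia). subst; auto.
  - right; right. destruct Hs as [Hm [Hcm H]]. assert (m = k) by (apply (circ_unique m k p); auto; lia). subst; auto.
Qed.

Lemma pt_ne_origin_x a b : a <> 0 -> (a, b) <> origin.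
Proof. intros H E. inversion E. auto. Qed.
Lemma pt_ne_origin_y a b : b <> 0 -> (a, b) <> origin.
Proof. intros H E. inversion E. auto. Qed.

Lemma phase1 N k ph v : (1 <= k <= N)%nat -> 0 < ph < / 4 ->
  star N v (circ_pt k (ph - / 4)) -> v = V0 \/ v = VR k.
Proof.
  intros Hk Hph Hs. pose proof (circ_pt_in k (ph - /4) ltac:(lia)) as Hc.
  rewrite circ_pt_xy in *.
  assert (Hi : 0 < / INR k) by (apply Rinv_0_lt_compat, INR_pos; lia).
  assert (Hsn : 0 < sin (2 * PI * ph)) by (apply sin_gt_0; pose proof PI_RGT_0; nra).
  assert (Hcs : 0 < cos (2 * PI * ph)) by (apply cos_gt_0; pose proof PI_RGT_0; nra).
  apply (star_onC N k) in Hs; auto. 2:{ apply pt_ne_origin_x. nra. }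
  simpl in Hs. destruct Hs as [[H _]|[[H _]|[H1 H2]]]; auto.
  exfalso. apply H2. split; nra.
Qed.

Lemma phase2 N k ph v : (1 <= k <= N)%nat -> / 4 <= ph <= 3 / 4 ->
  star N v (circ_pt k (ph - / 4)) -> v = VR k \/ v = VL k.
Proof.
  intros Hk Hph Hs. pose proof (circ_pt_in k (ph - /4) ltac:(lia)) as Hc.
  rewrite circ_pt_xy in *.
  assert (Hi : 0 < / INR k) by (apply Rinv_0_lt_compat, INR_pos; lia).
  assert (Hcs : cos (2 * PI * ph) <= 0) by (apply cos_le_0; pose proof PI_RGT_0; nra).
  apply (star_onC N k) in Hs; auto. 2:{ apply pt_ne_origin_y. nra. }
  simpl in Hs. destruct Hs as [[H1 H2]|[[H _]|[H _]]]; auto.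
  exfalso. nra.
Qed.

Lemma phase3 N k ph v : (1 <= k <= N)%nat -> 3 / 4 < ph < 1 ->
  star N v (circ_pt k (ph - / 4)) -> v = V0 \/ v = VL k.
Proof.
  intros Hk Hph Hs. pose proof (circ_pt_in k (ph - /4) ltac:(lia)) as Hc.
  rewrite circ_pt_xy in *.
  assert (Hi : 0 < / INR k) by (apply Rinv_0_lt_compat, INR_pos; lia).
  assert (Hsn : sin (2 * PI * ph) < 0) by (apply sin_lt_0; pose proof PI_RGT_0; nra).
  assert (Hcs : 0 < cos (2 * PI * ph)).
  { replace (cos (2 * PI * ph)) with (cos (2 * PI * ph - 2 * PI)).
    apply cos_gt_0; pose proof PI_RGT_0; nra.
    rewrite cos_minus, cos_2PI, sin_2PI. ring. }
  apply (star_onC N k) in Hs; auto. 2:{ apply pt_ne_origin_x. nra. }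
  simpl in Hs. destruct Hs as [[H _]|[[H1 H2]|[H _]]]; auto.
  exfalso. apply H2. split; nra.
Qed.

Lemma g_rest N s v : (forall k, (1 <= k <= N)%nat -> ~ (a_k k < s < b_k k)) ->
  star N v (g_loop s) -> v = V0.
Proof.
  intros Hr Hs. destruct (classic (exists k, (1 <= k)%nat /\ a_k k < s < b_k k)) as [[k [Hk Hg]]|Hn].
  - rewrite (gE k s Hk Hg) in Hs. destruct (le_lt_dec k N).
    + exfalso. apply (Hr k); auto.
    + eapply (star_big N k _ v); eauto. apply circ_pt_in; auto.
  - rewrite g0 in Hs. apply (star_origin N v Hs). intros k Hk Hg. apply Hn; eauto.
Qed.

Open Scope R_scope.

Lemma uc2 (H : R -> R -> pt) : cont_on_I2 H -> forall eps, 0 < eps -> exists rho, 0 < rho /\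
  forall s t s' t', unit_I s -> unit_I t -> unit_I s' -> unit_I t' ->
    Rabs (s - s') < rho -> Rabs (t - t') < rho -> dist2 (H s t) (H s' t') < eps.
Proof.
  intros Hc eps Heps.
  assert (Hex : forall u v, exists d : posreal, unit_I u -> unit_I v -> forall s' t', unit_I s' -> unit_I t' ->
     sqrt ((s' - u)^2 + (t' - v)^2) < 4 * d -> dist2 (H s' t') (H u v) < eps / 2).
  { intros u v. destruct (classic (unit_I u /\ unit_I v)) as [[Hu Hv]|Hn].
    - destruct (Hc u v Hu Hv (eps/2) ltac:(lra)) as [d [Hd Hp]].
      assert (Hd4 : 0 < d / 4) by lra. exists (mkposreal _ Hd4). intros _ _ s' t' Hs' Ht' Hsq. cbn [pos] in Hsq.
      apply Hp; auto. lra.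
    - exists (mkposreal 1 Rlt_0_1). intros Hu Hv. exfalso; auto. }
  set (D := fun u v => proj1_sig (constructive_indefinite_description _ (Hex u v))).
  assert (HD : forall u v, unit_I u -> unit_I v -> forall s' t', unit_I s' -> unit_I t' ->
     sqrt ((s' - u)^2 + (t' - v)^2) < 4 * D u v -> dist2 (H s' t') (H u v) < eps / 2).
  { intros u v. unfold D. destruct (constructive_indefinite_description _ (Hex u v)) as [d Hd]. exact Hd. }
  destruct (Compactness.compactness_value_2d 0 1 0 1 D) as [d0 Hd0].
  exists d0. split; [apply cond_pos|].
  intros s t s' t' Hs Ht Hs' Ht' H1 H2.
  apply NNPP. intros Hneg. apply (Hd0 s t Hs Ht). intros [u [v [Hu [Hv [Hsu [Htv Hle]]]]]].
  apply Hneg. pose proof (cond_pos (D u v)).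
  assert (A1 : dist2 (H s t) (H u v) < eps / 2).
  { apply HD; auto. eapply Rle_lt_trans. apply sqrt_sum_le. pose proof (cond_pos (D u v)). lra. }
  assert (A2 : dist2 (H s' t') (H u v) < eps / 2).
  { apply HD; auto. eapply Rle_lt_trans. apply sqrt_sum_le.
    assert (Rabs (s' - u) < 2 * D u v).
    { replace (s' - u) with ((s' - s) + (s - u)) by ring. eapply Rle_lt_trans. apply Rabs_triang.
      rewrite Rabs_minus_sym in H1. lra. }
    assert (Rabs (t' - v) < 2 * D u v).
    { replace (t' - v) with ((t' - t) + (t - v)) by ring. eapply Rle_lt_trans. apply Rabs_triang.
      rewrite Rabs_minus_sym in H2. lra. }
    lra. }
  pose proof (dist2_tri (H s t) (H u v) (H s' t')) as Tri. rewrite (dist2_sym (H u v)) in Tri. lra.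
Qed.

Lemma haw_bounds p : hawaiian p -> Rabs (fst p) <= 1 /\ 0 <= snd p <= 2.
Proof.
  intros [n [Hn Hc]]. destruct (circ_bounds n p Hn Hc) as [[H1 H2] H3].
  assert (Hi : / INR n <= 1).
  { rewrite <- Rinv_1. apply inv_le_inv; [lra|]. apply (le_INR 1); auto. }
  pose proof (Rinv_0_lt_compat _ (INR_pos n Hn)).
  split; [|lra].
  assert (fst p ^ 2 <= 1) by nra.
  destruct (Rcase_abs (fst p)); [rewrite Rabs_left|rewrite Rabs_right]; nra.
Qed.

Definition clamp (t : R) : R := Rmax 0 (Rmin 1 t).

Lemma clamp_I t : unit_I (clamp t).
Proof. unfold clamp, unit_I. unfold Rmin; destruct (Rle_dec 1 t); unfold Rmax; match goal with |- context [Rle_dec ?a ?b] => destruct (Rle_dec a b) end; lra. Qed.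

Lemma clamp_id t : unit_I t -> clamp t = t.
Proof. intros [H1 H2]. unfold clamp. unfold Rmin; destruct (Rle_dec 1 t); unfold Rmax; match goal with |- context [Rle_dec ?a ?b] => destruct (Rle_dec a b) end; lra. Qed.

Lemma clamp_lip t t' : Rabs (clamp t - clamp t') <= Rabs (t - t').
Proof.
  unfold clamp. unfold Rmin; destruct (Rle_dec 1 t), (Rle_dec 1 t'); unfold Rmax;
  repeat match goal with |- context [Rle_dec ?a ?b] => destruct (Rle_dec a b) end;
  unfold Rabs; repeat match goal with |- context [Rcase_abs ?a] => destruct (Rcase_abs a) end; lra.
Qed.

Lemma zero_between (f : R -> pt) a b k k' : cont_on_I f -> (forall x, unit_I x -> hawaiian (f x)) ->
  0 <= a -> a <= b -> b <= 1 -> (1 <= k)%nat -> (1 <= k')%nat -> k <> k' ->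
  in_circle k (f a) -> f a <> origin -> in_circle k' (f b) -> f b <> origin ->
  exists t, a <= t <= b /\ f t = origin.
Proof.
  intros Hf Hh Ha Hab Hb Hk Hk' Hkk Hca Hna Hcb Hnb.
  set (K := Nat.max k k').
  set (c := 2 / (INR K - / 2)).
  assert (HK1 : 1 <= INR K) by (apply (le_INR 1); unfold K; lia).
  assert (Hc0 : 0 < c) by (unfold c; apply Rdiv_lt_0_compat; lra).
  assert (Hnc : forall n, (1 <= n)%nat -> 2 * / INR n <> c).
  { intros n Hn E. unfold c in E. pose proof (INR_pos n Hn).
    assert (INR n = INR K - / 2).
    { apply (f_equal Rinv) in E. rewrite Rinv_mult, Rinv_inv in E. unfold Rdiv in E.
      rewrite Rinv_mult, Rinv_inv in E. lra. }
    assert (INR (2 * n + 1) = INR (2 * K)) by (rewrite plus_INR, !mult_INR; simpl; lra).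
    apply INR_eq in H1. lia. }
  set (psi := fun p : pt => (fst p)^2 + (snd p)^2 - c * snd p).
  assert (Hpsi : forall n p, (1 <= n)%nat -> in_circle n p -> psi p = snd p * (2 * / INR n - c)).
  { intros n p Hn Hcp. unfold psi. rewrite (circ_eq n p Hn Hcp). ring. }
  set (F := fun t => psi (f (clamp t))).
  assert (HFc : continuity F).
  { intros x. unfold continuity_pt, continue_in, limit1_in, limit_in. simpl. unfold R_dist.
    intros eps Heps.
    set (B := 10 + c).
    destruct (Hf (clamp x) (clamp_I x) (eps / B) ltac:(unfold B; apply Rdiv_lt_0_compat; lra)) as [d [Hd Hp]].
    exists d. split; auto. intros x' [_ Hx'].
    assert (Hcl : Rabs (clamp x' - clamp x) < d) by (eapply Rle_lt_trans; [apply clamp_lip|exact Hx']).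
    specialize (Hp (clamp x') (clamp_I x') Hcl).
    pose proof (dist2_ge_x (f (clamp x')) (f (clamp x))) as Dx.
    pose proof (dist2_ge_y (f (clamp x')) (f (clamp x))) as Dy.
    destruct (haw_bounds _ (Hh _ (clamp_I x'))) as [Bx1 By1].
    destruct (haw_bounds _ (Hh _ (clamp_I x))) as [Bx2 By2].
    unfold F, psi.
    set (p := f (clamp x')) in *. set (q := f (clamp x)) in *.
    replace (fst p ^ 2 + snd p ^ 2 - c * snd p - (fst q ^ 2 + snd q ^ 2 - c * snd q))
      with ((fst p + fst q) * (fst p - fst q) + (snd p + snd q - c) * (snd p - snd q)) by ring.
    eapply Rle_lt_trans. apply Rabs_triang. rewrite !Rabs_mult.
    assert (Rabs (fst p + fst q) <= 2) by (eapply Rle_trans; [apply Rabs_triang|lra]).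
    assert (Rabs (snd p + snd q - c) <= 4 + c) by (unfold Rabs; destruct (Rcase_abs _); lra).
    assert (E : eps / B * B = eps) by (unfold B; field; lra).
    assert (dist2 p q * B < eps) by (rewrite <- E; apply Rmult_lt_compat_r; [unfold B; lra | exact Hp]).
    pose proof (Rabs_pos (fst p + fst q)). pose proof (Rabs_pos (snd p + snd q - c)).
    assert (Rabs (fst p + fst q) * Rabs (fst p - fst q) <= 2 * dist2 p q)
      by (apply Rmult_le_compat; auto using Rabs_pos).
    assert (Rabs (snd p + snd q - c) * Rabs (snd p - snd q) <= (4 + c) * dist2 p q)
      by (apply Rmult_le_compat; auto using Rabs_pos).
    pose proof (dist2_pos p q).
    unfold B in *. nra. }
  assert (Hab' : a < b).
  { destruct Hab as [|<-]; auto. exfalso. apply Hkk. apply (circ_unique k k' (f a)); auto. }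
  assert (Fa : F a = snd (f a) * (2 * / INR k - c)) by (unfold F; rewrite clamp_id by (split; lra); apply Hpsi; auto).
  assert (Fb : F b = snd (f b) * (2 * / INR k' - c)) by (unfold F; rewrite clamp_id by (split; lra); apply Hpsi; auto).
  pose proof (circ_ypos k (f a) Hk Hca Hna). pose proof (circ_ypos k' (f b) Hk' Hcb Hnb).
  assert (Hz : exists z, a <= z <= b /\ F z = 0).
  { assert (Hsign : forall n, (1 <= n <= K)%nat -> (2 * / INR n - c > 0) \/ n = K).
    { intros n Hn. destruct (Nat.eq_dec n K); [right; auto|left].
      assert (INR n + 1 <= INR K) by (rewrite <- S_INR; apply le_INR; lia).
      pose proof (INR_pos n ltac:(lia)). unfold c.
      apply Rgt_minus. unfold Rdiv. apply Rlt_gt.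
      assert (/ (INR K - / 2) < / (INR n)) by (apply Rinv_lt_contravar; [apply Rmult_lt_0_compat; lra| lra]).
      lra. }
    assert (HKc : 2 * / INR K - c < 0).
    { unfold c. pose proof (Rinv_lt_contravar (INR K - /2) (INR K) ltac:(nra) ltac:(lra)). unfold Rdiv. lra. }
    assert (k = K \/ k' = K) by (unfold K; lia).
    destruct H1 as [EK|EK].
    - destruct (Hsign k' ltac:(unfold K; lia)) as [Hs|Hs]; [|exfalso; unfold K in *; lia].
      rewrite EK in Fa.
      assert (Fa' : F a < 0) by (rewrite Fa; nra). assert (Fb' : 0 < F b) by (rewrite Fb; nra).
      destruct (IVT F a b HFc Hab' Fa' Fb') as [z Hz]. eauto.
    - destruct (Hsign k ltac:(unfold K; lia)) as [Hs|Hs]; [|exfalso; unfold K in *; lia].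
      rewrite EK in Fb.
      assert (Fa' : - F a < 0) by (rewrite Fa; nra). assert (Fb' : 0 < - F b) by (rewrite Fb; nra).
      destruct (IVT (fun t => - F t) a b ltac:(apply continuity_opp; auto) Hab' Fa' Fb') as [z [Hz1 Hz2]].
      exists z. split; auto. lra. }
  destruct Hz as [z [Hz1 Hz2]]. exists z. split; auto.
  unfold F in Hz2. rewrite clamp_id in Hz2 by (split; lra).
  destruct (classic (f z = origin)) as [|Hne]; auto. exfalso.
  destruct (Hh z ltac:(split; lra)) as [n [Hn Hcn]].
  rewrite (Hpsi n _ Hn Hcn) in Hz2. pose proof (circ_ypos n _ Hn Hcn Hne).
  apply (Hnc n Hn). apply Rmult_integral in Hz2. destruct Hz2; lra.
Qed.

Open Scope R_scope.

(* limsup of a [0,1]-valued sequence *)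
Definition Aset (u : nat -> R) (t : R) : Prop := forall M, exists n, (M <= n)%nat /\ t <= u n.

Section LS.
Variable u : nat -> R.
Hypothesis Hu : forall n, 0 <= u n <= 1.

Lemma Aset_bound : bound (Aset u).
Proof. exists 1. intros t Ht. destruct (Ht 0%nat) as [n [_ Hn]]. pose proof (Hu n). lra. Qed.
Lemma Aset_ne : exists t, Aset u t.
Proof. exists 0. intros M. exists M. split; auto. apply Hu. Qed.

Definition lsup : R := proj1_sig (completeness (Aset u) Aset_bound Aset_ne).

Lemma lsup_lub : is_lub (Aset u) lsup.
Proof. unfold lsup. destruct (completeness _ _ _) as [x Hx]. exact Hx. Qed.

Lemma lsup_01 : 0 <= lsup <= 1.
Proof.
  destruct lsup_lub as [H1 H2]. split.
  - apply H1. intros M. exists M. split; auto. apply Hu.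
  - apply H2. intros t Ht. destruct (Ht 0%nat) as [n [_ Hn]]. pose proof (Hu n). lra.
Qed.

Lemma L1 eps M : 0 < eps -> exists n, (M <= n)%nat /\ lsup - eps < u n.
Proof.
  intros He. destruct lsup_lub as [H1 H2].
  apply NNPP. intros Hn.
  assert (Hb : is_upper_bound (Aset u) (lsup - eps)).
  { intros t Ht. destruct (Ht M) as [n [Hn1 Hn2]].
    destruct (Rle_dec t (lsup - eps)); auto. exfalso. apply Hn. exists n. split; auto. lra. }
  specialize (H2 _ Hb). lra.
Qed.

Lemma L2 eps : 0 < eps -> exists M, forall n, (M <= n)%nat -> u n < lsup + eps.
Proof.
  intros He. apply NNPP. intros Hn.
  assert (HA : Aset u (lsup + eps)).
  { intros M. apply NNPP. intros C. apply Hn. exists M. intros n Hn1.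
    destruct (Rlt_dec (u n) (lsup + eps)); auto. exfalso. apply C. exists n. split; auto. lra. }
  destruct lsup_lub as [H1 _]. specialize (H1 _ HA). lra.
Qed.
End LS.

Lemma lsup_shift u v (Hu : forall n, 0 <= u n <= 1) (Hv : forall n, 0 <= v n <= 1) d n0 :
  (forall n, (n0 <= n)%nat -> u n + d <= v n) -> lsup u Hu + d <= lsup v Hv.
Proof.
  intros Huv. destruct (Rle_dec (lsup u Hu + d) (lsup v Hv)) as [|Hlt]; auto. exfalso.
  set (e := (lsup u Hu + d - lsup v Hv) / 2).
  assert (He : 0 < e) by (unfold e; lra).
  destruct (L2 v Hv e He) as [M HM].
  destruct (L1 u Hu e (Nat.max M n0) He) as [n [Hn1 Hn2]].
  specialize (HM n ltac:(lia)). specialize (Huv n ltac:(lia)). unfold e in *. lra.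
Qed.

Fixpoint unpair (n : nat) : nat * nat :=
  match n with
  | O => (0%nat, 0%nat)
  | S n' => let (a, b) := unpair n' in
            match a with O => (S b, 0%nat) | S a' => (a', S b) end
  end.

Lemma unpair_surj : forall a b, exists n, unpair n = (a, b).
Proof.
  assert (Hd : forall s b, (b <= s)%nat -> exists n, unpair n = ((s - b)%nat, b)).
  { induction s as [|s IH]; intros b Hb.
    - assert (b = 0%nat) by lia. subst. now exists 0%nat.
    - induction b as [|b IHb].
      + destruct (IH s ltac:(lia)) as [n Hn]. exists (S n). simpl. rewrite Hn.
        replace (s - s)%nat with 0%nat by lia. f_equal; try lia.
      + destruct (IHb ltac:(lia)) as [n Hn]. exists (S n). simpl. rewrite Hn.
        destruct (S s - b)%nat eqn:E; [lia|]. f_equal; try lia. }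
  intros a b. destruct (Hd (a + b)%nat b ltac:(lia)) as [n Hn]. exists n. rewrite Hn. f_equal. lia.
Qed.

Definition dd (n : nat) : R :=
  let (a, b) := unpair n in let (c, d) := unpair a in (INR c - INR d) / 2 ^ b.

Lemma dd_dense r1 r2 : r1 < r2 -> exists n, r1 < dd n < r2.
Proof.
  intros Hr.
  destruct (Pow_x_infinity 2 ltac:(rewrite Rabs_right; lra) (2 / (r2 - r1))) as [b Hb].
  specialize (Hb b (Nat.le_refl b)). rewrite Rabs_right in Hb by (left; apply pow_lt; lra).
  pose proof (pow_lt 2 b ltac:(lra)) as H2b.
  set (z := up (2 ^ b * r1)). destruct (archimed (2 ^ b * r1)) as [Hz1 Hz2]. fold z in Hz1, Hz2.
  set (c := Z.to_nat z). set (d := Z.to_nat (- z)).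
  assert (Hcd : IZR z = INR c - INR d).
  { unfold c, d. rewrite !INR_IZR_INZ. destruct (Z_le_gt_dec 0 z).
    - rewrite Z2Nat.id by lia. replace (Z.to_nat (- z)) with 0%nat by lia. simpl. lra.
    - rewrite (Z2Nat.id (- z)) by lia. replace (Z.to_nat z) with 0%nat by lia. simpl. rewrite opp_IZR. lra. }
  destruct (unpair_surj c d) as [a Ha]. destruct (unpair_surj a b) as [n Hn].
  exists n. unfold dd. rewrite Hn, Ha. rewrite <- Hcd.
  assert (E1 : 2 / (r2 - r1) * (r2 - r1) = 2) by (field; lra).
  assert (Hb' : 2 ^ b * (r2 - r1) >= 2).
  { assert (2 ^ b * (r2 - r1) >= 2 / (r2 - r1) * (r2 - r1)) by (apply Rmult_ge_compat_r; lra). lra. }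
  assert (E2 : 2 ^ b * (IZR z / 2 ^ b) = IZR z) by (field; lra).
  split.
  - apply Rmult_lt_reg_l with (r := 2 ^ b); auto. rewrite E2. lra.
  - apply Rmult_lt_reg_l with (r := 2 ^ b); auto. rewrite E2. lra.
Qed.

Definition beta (r : R) (n : nat) : bool := if Rlt_dec (dd n) r then true else false.

Lemma beta_sep r1 r2 : r1 < r2 -> exists n, beta r1 n = false /\ beta r2 n = true.
Proof.
  intros Hr. destruct (dd_dense r1 r2 Hr) as [n Hn]. exists n. unfold beta.
  destruct (Rlt_dec (dd n) r1); destruct (Rlt_dec (dd n) r2); try lra; auto.
Qed.

Lemma least_diff (be be' : nat -> bool) : (exists i, be i <> be' i) ->
  exists i, be i <> be' i /\ forall j, (j < i)%nat -> be j = be' j.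
Proof.
  intros [i Hi]. revert Hi. induction i as [i IH] using lt_wf_ind. intros Hi.
  destruct (classic (exists j, (j < i)%nat /\ be j <> be' j)) as [[j [Hj1 Hj2]]|Hn].
  - exact (IH j Hj1 Hj2).
  - exists i. split; auto. intros j Hj. apply NNPP. intros C. apply Hn. eauto.
Qed.

Open Scope R_scope.

Lemma crossing (P : nat -> Prop) lo hi : (lo <= hi)%nat -> P lo -> ~ P hi ->
  exists j, (lo <= j < hi)%nat /\ P j /\ ~ P (S j).
Proof.
  intros Hle Hlo Hhi. induction hi as [|hi IH].
  - assert (lo = 0%nat) by lia. subst. contradiction.
  - destruct (Nat.eq_dec lo (S hi)) as [->|Hne]; [contradiction|].
    destruct (classic (P hi)) as [Ph|Ph].
    + exists hi. split; [lia|]. auto.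
    + destruct (IH ltac:(lia) Ph) as [j [? ?]]. exists j. split; [lia|auto].
Qed.

Lemma pow3_large eps : 0 < eps -> exists K, / 3 ^ K < eps.
Proof.
  intros He. destruct (Pow_x_infinity 3 ltac:(rewrite Rabs_right; lra) (/ eps + 1)) as [K HK].
  exists K. specialize (HK K (Nat.le_refl K)). rewrite Rabs_right in HK by (left; apply pow3_pos).
  pose proof (pow3_pos K). pose proof (Rinv_0_lt_compat _ He).
  apply Rmult_lt_reg_l with (r := 3 ^ K); auto. rewrite Rinv_r by lra.
  apply Rmult_lt_reg_l with (r := / eps); auto.
  replace (/ eps * (3 ^ K * eps)) with (3 ^ K) by (field; lra). lra.
Qed.

Lemma endpoint_a_not_gap k k' : (1 <= k)%nat -> (1 <= k')%nat -> ~ (a_k k' < a_k k < b_k k').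
Proof.
  intros Hk Hk' Hg. pose proof (ab_lt k).
  set (e := Rmin (b_k k' - a_k k) (b_k k - a_k k)).
  assert (He : 0 < e) by (unfold e, Rmin; destruct (Rle_dec _ _); lra).
  assert (He1 : e <= b_k k' - a_k k) by apply Rmin_l.
  assert (He2 : e <= b_k k - a_k k) by apply Rmin_r.
  assert (k = k') by (apply (gap_disjoint k k' (a_k k + e / 2)); auto; lra). subst. lra.
Qed.

Lemma endpoint_b_not_gap k k' : (1 <= k)%nat -> (1 <= k')%nat -> ~ (a_k k' < b_k k < b_k k').
Proof.
  intros Hk Hk' Hg. pose proof (ab_lt k).
  set (e := Rmin (b_k k - a_k k') (b_k k - a_k k)).
  assert (He : 0 < e) by (unfold e, Rmin; destruct (Rle_dec _ _); lra).
  assert (He1 : e <= b_k k - a_k k') by apply Rmin_l.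
  assert (He2 : e <= b_k k - a_k k) by apply Rmin_r.
  assert (k = k') by (apply (gap_disjoint k k' (b_k k - e / 2)); auto; lra). subst. lra.
Qed.

Section Main.
Variables (f : R -> pt) (H : R -> R -> pt).
Hypothesis Hf : loop_in_X f.
Hypothesis HH : cont_on_I2 H.
Hypothesis Hhaw : forall s t, unit_I s -> unit_I t -> hawaiian (H s t).
Hypothesis HH0 : forall s, unit_I s -> H s 0 = f s.
Hypothesis HH1 : forall s, unit_I s -> H s 1 = g_loop s.
Hypothesis Hend : forall t, unit_I t -> H 0 t = f 0 /\ H 1 t = f 1.

Lemma f0 : f 0 = origin. Proof. destruct Hf as [_ [_ [? _]]]; auto. Qed.
Lemma f1 : f 1 = origin. Proof. destruct Hf as [_ [_ [_ ?]]]; auto. Qed.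
Lemma fcont : cont_on_I f. Proof. destruct Hf as [? _]; auto. Qed.
Lemma fhaw : forall x, unit_I x -> hawaiian (f x). Proof. destruct Hf as [_ [? _]]; auto. Qed.

Lemma ucf m : exists d, 0 < d /\ forall s s', unit_I s -> unit_I s' -> Rabs (s - s') < d ->
  dist2 (f s) (f s') < / INR (S m).
Proof.
  destruct (uc2 H HH (/ INR (S m)) ltac:(apply Rinv_0_lt_compat, lt_0_INR; lia)) as [r [Hr Hu]].
  exists r. split; auto. intros s s' Hs Hs' Hd. rewrite <- (HH0 s), <- (HH0 s') by auto.
  apply Hu; auto; try (split; lra). rewrite Rminus_diag, Rabs_R0. auto.
Qed.

Definition dm (m : nat) : R := proj1_sig (constructive_indefinite_description _ (ucf m)).

Lemma dm_spec m : 0 < dm m /\ forall s s', unit_I s -> unit_I s' -> Rabs (s - s') < dm m ->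
  dist2 (f s) (f s') < / INR (S m).
Proof. unfold dm. destruct (constructive_indefinite_description _ _) as [d Hd]. exact Hd. Qed.


Section Grid.
Variable N : nat.
Hypothesis HN : (1 <= N)%nat.
Variable L : R.
Hypothesis HL : 0 < L.
Variable vc : pt -> vtx.
Hypothesis Hvc : forall z, hawaiian z -> forall z', hawaiian z' -> dist2 z' z < L -> star N (vc z) z'.
Variable rho : R.
Hypothesis Hrho : 0 < rho.
Hypothesis Hu : forall s t s' t', unit_I s -> unit_I t -> unit_I s' -> unit_I t' ->
  Rabs (s - s') < rho -> Rabs (t - t') < rho -> dist2 (H s t) (H s' t') < L.
Variable K : nat.
Hypothesis HK : (N + 2 <= K)%nat.
Hypothesis HKr : / 3 ^ K < rho.

Definition hh : R := / 3 ^ K.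
Definition Mk : nat := (3 ^ K)%nat.
Definition sg (j : nat) : R := INR j * hh.
Definition vv (k j : nat) : vtx := vc (H (sg j) (sg k)).

Lemma INR_Mk : INR Mk = 3 ^ K.
Proof. unfold Mk. rewrite pow_INR. simpl. f_equal. lra. Qed.

Lemma hh_pos : 0 < hh. Proof. apply inv3_pos. Qed.

Lemma sg_Mk : sg Mk = 1.
Proof. unfold sg, hh. rewrite INR_Mk. field. pose proof (pow3_pos K); lra. Qed.

Lemma sg_0 : sg 0 = 0. Proof. unfold sg. simpl. ring. Qed.

Lemma sg_S j : sg (S j) = sg j + hh. Proof. unfold sg. rewrite S_INR. ring. Qed.

Lemma sg_lt i j : (i < j)%nat -> sg i < sg j.
Proof. intros. unfold sg. apply Rmult_lt_compat_r. apply hh_pos. apply lt_INR; auto. Qed.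

Lemma sg_le i j : (i <= j)%nat -> sg i <= sg j.
Proof. intros. unfold sg. apply Rmult_le_compat_r. left; apply hh_pos. apply le_INR; auto. Qed.

Lemma sg_lt_inv i j : sg i < sg j -> (i < j)%nat.
Proof. intros. destruct (le_lt_dec j i) as [Hle|]; auto. apply sg_le in Hle. lra. Qed.

Lemma sg_le_inv i j : sg i <= sg j -> (i <= j)%nat.
Proof. intros. destruct (le_lt_dec i j) as [|Hlt]; auto. apply sg_lt in Hlt. lra. Qed.

Lemma sg_I j : (j <= Mk)%nat -> unit_I (sg j).
Proof.
  intros Hj. split. unfold sg. apply Rmult_le_pos. apply pos_INR. left; apply hh_pos.
  rewrite <- sg_Mk. apply sg_le; auto.
Qed.

Lemma vc_origin : vc origin = V0.
Proof.
  apply (star_origin N). apply Hvc.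
  exists 1%nat. split; auto. apply circ_origin. exists 1%nat. split; auto. apply circ_origin.
  unfold dist2, origin; simpl. replace ((0 - 0) * ((0 - 0) * 1) + (0 - 0) * ((0 - 0) * 1)) with 0 by ring.
  rewrite sqrt_0. auto.
Qed.

Lemma V1 k : (k <= Mk)%nat -> vv k 0 = V0 /\ vv k Mk = V0.
Proof.
  intros Hk. unfold vv. rewrite sg_0, sg_Mk.
  destruct (Hend (sg k) (sg_I k Hk)) as [E1 E2]. rewrite E1, E2, f0, f1.
  split; apply vc_origin.
Qed.

Lemma near_star k j s t : (k <= Mk)%nat -> (j <= Mk)%nat -> unit_I s -> unit_I t ->
  Rabs (s - sg j) < rho -> Rabs (t - sg k) < rho -> star N (vv k j) (H s t).
Proof.
  intros Hk Hj Hs Ht H1 H2. unfold vv. apply Hvc.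
  apply Hhaw; apply sg_I; auto. apply Hhaw; auto. apply Hu; auto; apply sg_I; auto.
Qed.

Lemma hh_rho : hh < rho. Proof. exact HKr. Qed.

Lemma sg_dist i j : (i <= j <= S i)%nat -> Rabs (sg j - sg i) < rho.
Proof.
  intros Hij. pose proof hh_rho. pose proof hh_pos.
  destruct (Nat.eq_dec j i) as [->|Hne]. rewrite Rminus_diag, Rabs_R0. lra.
  assert (j = S i) by lia. subst. rewrite sg_S. replace (sg i + hh - sg i) with hh by ring.
  rewrite Rabs_right; lra.
Qed.

Lemma V2 k j : (k < Mk)%nat -> (j < Mk)%nat -> exists a b,
  (vv k j = a \/ vv k j = b) /\ (vv k (S j) = a \/ vv k (S j) = b) /\
  (vv (S k) j = a \/ vv (S k) j = b) /\ (vv (S k) (S j) = a \/ vv (S k) (S j) = b).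
Proof.
  intros Hk Hj.
  assert (Hz : hawaiian (H (sg j) (sg k))) by (apply Hhaw; apply sg_I; lia).
  destruct (simplex N _ Hz) as [a [b Hab]]. exists a, b.
  assert (Is : unit_I (sg j)) by (apply sg_I; lia). assert (It : unit_I (sg k)) by (apply sg_I; lia).
  repeat split; apply Hab; apply near_star; auto; try lia;
    try (rewrite Rabs_minus_sym; apply sg_dist; lia);
    (rewrite Rminus_diag, Rabs_R0; lra).
Qed.

Lemma V3 : stk (vv 0) Mk = stk (vv Mk) Mk.
Proof.
  assert (forall k, (k <= Mk)%nat -> stk (vv 0) Mk = stk (vv k) Mk).
  { induction k; intros Hk; auto. rewrite IHk by lia.
    apply row_invariance.
    - destruct (V1 k ltac:(lia)), (V1 (S k) ltac:(lia)). congruence.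
    - destruct (V1 k ltac:(lia)), (V1 (S k) ltac:(lia)). congruence.
    - intros j Hj. apply V2; lia. }
  apply H0; lia.
Qed.

Lemma V4 j s : (j <= Mk)%nat -> unit_I s -> Rabs (s - sg j) < rho -> star N (vv 0 j) (f s).
Proof.
  intros Hj Hs Hd. rewrite <- (HH0 s Hs). apply near_star; auto; try lia. split; lra.
  rewrite sg_0, Rminus_diag, Rabs_R0. lra.
Qed.

Lemma V5 j s : (j <= Mk)%nat -> unit_I s -> Rabs (s - sg j) < rho -> star N (vv Mk j) (g_loop s).
Proof.
  intros Hj Hs Hd. rewrite <- (HH1 s Hs). apply near_star; auto. split; lra.
  rewrite sg_Mk, Rminus_diag, Rabs_R0. lra.
Qed.


Lemma align k : (1 <= k <= N)%nat -> exists ia,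
  sg ia = a_k k /\ sg (ia + 3 ^ (K - S (lg k))) = b_k k /\ (ia + 3 ^ (K - S (lg k)) <= Mk)%nat.
Proof.
  intros Hk. set (n := lg k). set (e := (K - S n)%nat).
  assert (Hn : (n < k)%nat) by (unfold n, lg; apply Nat.log2_lt_lin; lia).
  assert (HKe : K = (S n + e)%nat) by (unfold e; lia).
  destruct (cl_int n (gJ k)) as [c Hc].
  assert (E3 : 3 ^ K = 3 ^ S n * 3 ^ e) by (rewrite HKe, pow_add; reflexivity).
  pose proof (pow3_pos (S n)). pose proof (pow3_pos e). pose proof (pow3_pos n).
  assert (E3' : 3 ^ S n = 3 * 3 ^ n) by reflexivity.
  assert (Ha : sg ((3 * c + 1) * 3 ^ e) = a_k k).
  { unfold sg, hh. rewrite a_k_eq. fold n. rewrite Hc. rewrite mult_INR, pow_INR, plus_INR, mult_INR.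
    replace (INR 3) with 3 by (simpl; ring). replace (INR 1) with 1 by reflexivity.
    rewrite E3, E3'. field. repeat split; lra. }
  assert (Hb : sg ((3 * c + 1) * 3 ^ e + 3 ^ e) = b_k k).
  { unfold sg, hh. rewrite b_k_eq. fold n. rewrite Hc. rewrite plus_INR, mult_INR, pow_INR, plus_INR, mult_INR.
    replace (INR 3) with 3 by (simpl; ring). replace (INR 1) with 1 by reflexivity.
    rewrite E3, E3'. field. repeat split; lra. }
  exists ((3 * c + 1) * 3 ^ e)%nat. split; auto. split; auto.
  apply sg_le_inv. rewrite Hb, sg_Mk. apply gap_in_01. lia.
Qed.

Definition rest (j : nat) : Prop := forall k, (1 <= k <= N)%nat -> ~ (a_k k < sg j < b_k k).

Definition wg := vv Mk.
Definition Sg (j : nat) := stk wg j.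

Lemma rest_V0 j : (j <= Mk)%nat -> rest j -> wg j = V0.
Proof.
  intros Hj Hr. unfold wg. apply (g_rest N (sg j)); auto.
  apply V5; auto. apply sg_I; auto. rewrite Rminus_diag, Rabs_R0; lra.
Qed.

Lemma wstar j j' : (j <= Mk)%nat -> (j' <= Mk)%nat -> (j' <= S j)%nat -> (j <= S j')%nat ->
  star N (wg j) (g_loop (sg j')).
Proof.
  intros. unfold wg. apply V5; auto. apply sg_I; auto.
  destruct (le_lt_dec j j'). apply sg_dist; lia. rewrite Rabs_minus_sym. apply sg_dist; lia.
Qed.

Lemma g_a_origin k : (1 <= k)%nat -> g_loop (a_k k) = origin.
Proof. intros Hk. apply g0. intros k' Hk'. apply endpoint_a_not_gap; auto. Qed.
Lemma g_b_origin k : (1 <= k)%nat -> g_loop (b_k k) = origin.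
Proof. intros Hk. apply g0. intros k' Hk'. apply endpoint_b_not_gap; auto. Qed.

Lemma block k ia r : (1 <= k <= N)%nat -> sg ia = a_k k ->
  sg (ia + 3 ^ (K - S (lg k))) = b_k k -> (ia + 3 ^ (K - S (lg k)) <= Mk)%nat ->
  Sg ia = V0 :: r -> (forall r', r <> VR k :: r') ->
  Sg (ia + 3 ^ (K - S (lg k))) = V0 :: VL k :: VR k :: V0 :: r.
Proof.
  intros Hk Ha Hb HM Hr Hnr.
  set (e := (K - S (lg k))%nat) in *. set (E := (3 ^ e)%nat) in *.
  assert (Hn : (lg k < k)%nat) by (unfold lg; apply Nat.log2_lt_lin; lia).
  assert (He : (2 <= e)%nat) by (unfold e; lia).
  assert (HE : 9 <= INR E).
  { unfold E. rewrite pow_INR. replace (INR 3) with 3 by (simpl; ring). replace e with (2 + (e - 2))%nat by lia.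
    rewrite pow_add. pose proof (pow_R1_Rle 3 (e - 2) ltac:(lra)).
    replace (3 ^ 2) with 9 by ring. lra. }
  set (a := a_k k) in *. set (b := b_k k) in *.
  assert (Hba : b - a = INR E * hh).
  { rewrite <- Ha, <- Hb. unfold sg. rewrite plus_INR. ring. }
  pose proof hh_pos as Hhh.
  set (ph := fun d : nat => INR d / INR E).
  assert (Hsg : forall d, sg (ia + d) = a + ph d * (b - a)).
  { intros d. unfold ph. rewrite Hba, <- Ha. unfold sg. rewrite plus_INR. field. lra. }
  assert (Hph_mono : forall d d', (d <= d')%nat -> ph d <= ph d').
  { intros. unfold ph, Rdiv. apply Rmult_le_compat_r. left; apply Rinv_0_lt_compat; lra. apply le_INR; auto. }
  assert (Hph_S : forall d, ph (S d) = ph d + / INR E) by (intros; unfold ph; rewrite S_INR; field; lra).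
  assert (Hph0 : ph 0%nat = 0) by (unfold ph; simpl; field; lra).
  assert (HphE : ph E = 1) by (unfold ph; field; lra).
  assert (HiE : / INR E <= / 9) by (apply inv_le_inv; lra).
  assert (HiE0 : 0 < / INR E) by (apply Rinv_0_lt_compat; lra).
  assert (Hab : a < b) by apply ab_lt.
  assert (Hg : forall d, (0 < d < E)%nat -> g_loop (sg (ia + d)) = circ_pt k (ph d - / 4)).
  { intros d Hd. assert (0 < ph d < 1).
    { split. unfold ph. apply Rdiv_lt_0_compat; [apply lt_0_INR; lia|lra].
      rewrite <- HphE. unfold ph. apply Rmult_lt_compat_r. apply Rinv_0_lt_compat; lra. apply lt_INR; lia. }
    rewrite (gE k) by (try lia; fold a b; rewrite Hsg; split; nra).
    f_equal. f_equal. fold a b. rewrite Hsg. field. lra. }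
  assert (HgE : g_loop (sg (ia + E)) = origin) by (rewrite Hb; apply g_b_origin; lia).
  assert (Hg0 : g_loop (sg (ia + 0)) = origin) by (rewrite Nat.add_0_r, Ha; apply g_a_origin; lia).
  assert (Hw : forall d d', (d <= E)%nat -> (d' <= E)%nat -> (d' <= S d)%nat -> (d <= S d')%nat ->
      star N (wg (ia + d)) (g_loop (sg (ia + d')))) by (intros; apply wstar; lia).
  destruct (crossing (fun d => ph d < / 4) 0 E ltac:(lia) ltac:(simpl; lra) ltac:(simpl; lra))
    as [d1 [Hd1 [P1 NP1]]]. cbn beta in P1, NP1.
  assert (Hd1' : (1 <= d1)%nat).
  { destruct d1; [|lia]. exfalso. apply NP1. rewrite Hph_S, Hph0. lra. }
  rewrite Hph_S in NP1.
  destruct (crossing (fun d => ph d <= 3 / 4) (S d1) E ltac:(lia) ltac:(simpl; rewrite Hph_S; lra) ltac:(simpl; lra))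
    as [d2 [Hd2 [P2 NP2]]]. cbn beta in P2, NP2. rewrite Hph_S in NP2.
  assert (Hd2' : (S d2 < E)%nat).
  { destruct (Nat.eq_dec (S d2) E) as [Heq|]; [|lia]. exfalso. rewrite <- Heq, Hph_S in HphE. lra. }
  assert (Hk' : (1 <= k <= N)%nat) by lia.
  assert (Mph1 : forall d, (1 <= d <= d1)%nat -> wg (ia + d) = V0 \/ wg (ia + d) = VR k).
  { intros d Hd. apply (phase1 N k (ph d)); auto.
    split. unfold ph; apply Rdiv_lt_0_compat; [apply lt_0_INR; lia|lra].
    pose proof (Hph_mono d d1 ltac:(lia)). lra.
    rewrite <- Hg by lia. apply Hw; lia. }
  assert (Mph2 : forall d, (S d1 <= d <= d2)%nat -> wg (ia + d) = VR k \/ wg (ia + d) = VL k).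
  { intros d Hd. apply (phase2 N k (ph d)); auto.
    pose proof (Hph_mono (S d1) d ltac:(lia)). pose proof (Hph_mono d d2 ltac:(lia)). rewrite Hph_S in H0. lra.
    rewrite <- Hg by lia. apply Hw; lia. }
  assert (Mph3 : forall d, (S d2 <= d < E)%nat -> wg (ia + d) = V0 \/ wg (ia + d) = VL k).
  { intros d Hd. apply (phase3 N k (ph d)); auto.
    pose proof (Hph_mono (S d2) d ltac:(lia)). rewrite Hph_S in H0. split; [lra|].
    rewrite <- HphE. unfold ph. apply Rmult_lt_compat_r. apply Rinv_0_lt_compat; lra. apply lt_INR; lia.
    rewrite <- Hg by lia. apply Hw; lia. }
  assert (W1 : wg (ia + S d1) = VR k).
  { assert (A1 : wg (ia + S d1) = VR k \/ wg (ia + S d1) = VL k).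
    { apply (phase2 N k (ph (S d1))); auto. rewrite Hph_S. lra.
      rewrite <- Hg by lia. apply Hw; lia. }
    assert (A2 : wg (ia + S d1) = V0 \/ wg (ia + S d1) = VR k).
    { apply (phase1 N k (ph d1)); auto.
      split. unfold ph; apply Rdiv_lt_0_compat; [apply lt_0_INR; lia|lra]. lra.
      rewrite <- Hg by lia. apply Hw; lia. }
    destruct A1 as [A1|A1]; auto. destruct A2 as [A2|A2]; congruence. }
  assert (W2 : wg (ia + d2) = VL k).
  { assert (A1 : wg (ia + d2) = VR k \/ wg (ia + d2) = VL k) by (apply Mph2; lia).
    assert (A2 : wg (ia + d2) = V0 \/ wg (ia + d2) = VL k).
    { apply (phase3 N k (ph (S d2))); auto. rewrite Hph_S. split; lra.
      rewrite <- Hg by lia. apply Hw; lia. }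
    destruct A1 as [A1|A1]; auto. destruct A2 as [A2|A2]; congruence. }
  assert (W0 : wg (ia + 0) = V0).
  { apply (star_origin N). rewrite <- Hg0. apply Hw; lia. }
  assert (WE : wg (ia + E) = V0).
  { apply (star_origin N). rewrite <- HgE. apply Hw; lia. }
  assert (S1 : Sg (ia + S d1) = st (Sg ia) (VR k)).
  { unfold Sg. rewrite <- W1. rewrite <- (Nat.add_0_r ia) at 2.
    apply (stk_range wg (ia + 0) (ia + S d1) V0 (VR k)). lia.
    intros i Hi. replace i with (ia + (i - ia))%nat by lia.
    destruct (Nat.eq_dec (i - ia) 0) as [E0|]. rewrite E0; auto.
    destruct (Nat.eq_dec (i - ia) (S d1)) as [E1|]. rewrite E1, W1; auto.
    apply Mph1; lia. }
  assert (S2 : Sg (ia + d2) = st (Sg (ia + S d1)) (VL k)).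
  { unfold Sg. rewrite <- W2.
    apply (stk_range wg (ia + S d1) (ia + d2) (VR k) (VL k)). lia.
    intros i Hi. replace i with (ia + (i - ia))%nat by lia. apply Mph2; lia. }
  assert (S3 : Sg (ia + E) = st (Sg (ia + d2)) V0).
  { unfold Sg. rewrite <- WE.
    apply (stk_range wg (ia + d2) (ia + E) V0 (VL k)). lia.
    intros i Hi. replace i with (ia + (i - ia))%nat by lia.
    destruct (Nat.eq_dec (i - ia) d2) as [E2|]. rewrite E2, W2; auto.
    destruct (Nat.eq_dec (i - ia) E) as [E3|]. rewrite E3, WE; auto.
    apply Mph3; lia. }
  rewrite S3, S2, S1, Hr.
  assert (T1 : st (V0 :: r) (VR k) = VR k :: V0 :: r).
  { destruct r as [|u r']; unfold st; destruct (vtx_eq_dec (VR k) V0); try discriminate; auto.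
    destruct (vtx_eq_dec (VR k) u); auto. subst. exfalso; apply (Hnr r'); auto. }
  rewrite T1. unfold st.
  destruct (vtx_eq_dec (VL k) (VR k)); [discriminate|]. destruct (vtx_eq_dec (VL k) V0); [discriminate|].
  destruct (vtx_eq_dec V0 (VL k)); [discriminate|]. destruct (vtx_eq_dec V0 (VR k)); [discriminate|].
  reflexivity.
Qed.


Lemma rest_a k ia : (1 <= k)%nat -> sg ia = a_k k -> rest ia.
Proof. intros Hk Ha k' Hk'. rewrite Ha. apply endpoint_a_not_gap; lia. Qed.
Lemma rest_b k ib : (1 <= k)%nat -> sg ib = b_k k -> rest ib.
Proof. intros Hk Hb k' Hk'. rewrite Hb. apply endpoint_b_not_gap; lia. Qed.
Lemma rest_Mk : rest Mk.
Proof. intros k Hk. rewrite sg_Mk. pose proof (gap_in_01 k ltac:(lia)). lra. Qed.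
Lemma rest_0 : rest 0.
Proof. intros k Hk. rewrite sg_0. pose proof (gap_in_01 k ltac:(lia)). lra. Qed.

Definition Ek (k : nat) : nat := (3 ^ (K - S (lg k)))%nat.

Lemma step j : (0 < j <= Mk)%nat -> rest j ->
  (rest (j - 1) /\ Sg j = Sg (j - 1)) \/
  (exists k ia, (1 <= k <= N)%nat /\ sg ia = a_k k /\ (ia + Ek k)%nat = j /\ sg j = b_k k /\
     (forall i, (ia < i < j)%nat -> ~ rest i) /\
     (forall r, Sg ia = V0 :: r -> (forall r', r <> VR k :: r') -> Sg j = V0 :: VL k :: VR k :: Sg ia)).
Proof.
  intros Hj Hr. destruct (classic (rest (j - 1))) as [Hr1|Hr1].
  - left. split; auto. unfold Sg. replace j with (S (j - 1)) at 1 by lia. rewrite stk_S.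
    replace (S (j - 1)) with j by lia. rewrite (rest_V0 j) by (auto; lia).
    destruct (stk_top wg (j - 1)) as [r Er]. rewrite Er, (rest_V0 (j - 1)) by (auto; lia).
    apply st_same.
  - right. unfold rest in Hr1. apply not_all_ex_not in Hr1 as [k Hk].
    apply imply_to_and in Hk as [Hk Hg]. apply NNPP in Hg.
    destruct (align k Hk) as [ia [Ha [Hb HM]]]. fold (Ek k) in Hb, HM.
    assert (Hl : (ia < j - 1)%nat) by (apply sg_lt_inv; lra).
    assert (Hu1 : (j - 1 < ia + Ek k)%nat) by (apply sg_lt_inv; lra).
    assert (Hj2 : (ia + Ek k <= j)%nat).
    { apply sg_le_inv. rewrite Hb. destruct (Rle_dec (b_k k) (sg j)); auto. exfalso.
      apply (Hr k Hk). split; [|lra]. pose proof (sg_lt (j - 1) j ltac:(lia)). lra. }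
    assert (Ej : (ia + Ek k)%nat = j) by lia.
    exists k, ia. split; auto. split; auto. split; auto. split; [rewrite <- Ej; auto|]. split.
    + intros i Hi Hri. apply (Hri k Hk). split; [rewrite <- Ha; apply sg_lt; lia|].
      rewrite <- Hb. apply sg_lt; lia.
    + intros r Hsr Hnr. rewrite Hsr. rewrite <- Ej. unfold Ek. apply block; auto.
Qed.

Lemma G_A j : (j <= Mk)%nat -> rest j ->
  Sg j = [V0] \/ exists k r, (1 <= k <= N)%nat /\ b_k k <= sg j /\ Sg j = V0 :: VL k :: VR k :: r.
Proof.
  induction j as [j IH] using lt_wf_ind. intros Hj Hr.
  destruct (Nat.eq_dec j 0) as [->|Hj0].
  - left. unfold Sg. simpl. rewrite (rest_V0 0); auto; lia.
  - destruct (step j ltac:(lia) Hr) as [[Hr1 E]|[k [ia [Hk [Ha [Ej [Hb [Hni Hblk]]]]]]]].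
    + rewrite E. destruct (IH (j - 1)%nat ltac:(lia) ltac:(lia) Hr1) as [|[k [r [Hk [Hb E2]]]]]; auto.
      right. exists k, r. split; auto. split; auto. pose proof (sg_le (j-1) j ltac:(lia)). lra.
    + right. assert (Hria : rest ia) by (apply (rest_a k); auto; lia).
      assert (Hia : (ia < j)%nat) by (unfold Ek in Ej; pose proof (Nat.pow_nonzero 3 (K - S (lg k))); lia).
      exists k, (Sg ia). split; auto. split; [lra|].
      destruct (IH ia Hia ltac:(lia) Hria) as [E|[k' [r [Hk' [_ E]]]]].
      * apply Hblk with (r := []). rewrite E; auto. intros r' C; discriminate.
      * apply Hblk with (r := VL k' :: VR k' :: r). rewrite E; auto. intros r' C; discriminate.
Qed.

Lemma Sg_pre j : (j <= Mk)%nat -> rest j -> exists r, Sg j = V0 :: r /\ forall k r', r <> VR k :: r'.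
Proof.
  intros Hj Hr. destruct (G_A j Hj Hr) as [E|[k [r [_ [_ E]]]]].
  - exists []. split; auto. intros; discriminate.
  - exists (VL k :: VR k :: r). split; auto. intros; discriminate.
Qed.

Lemma G_B j' : forall j, (j <= j' <= Mk)%nat -> rest j -> rest j' ->
  suff (Sg j) (Sg j') /\ (Sg j <> Sg j' -> exists k, (1 <= k <= N)%nat /\ sg j <= a_k k /\ suff (VR k :: Sg j) (Sg j')).
Proof.
  induction j' as [j' IH] using lt_wf_ind. intros j Hjj Hr Hr'.
  destruct (Nat.eq_dec j j') as [->|Hne].
  { split. apply suff_refl. intros C; exfalso; auto. }
  destruct (step j' ltac:(lia) Hr') as [[Hr1 E]|[k [ia [Hk [Ha [Ej [Hb [Hni Hblk]]]]]]]].
  - rewrite E. apply IH; auto; lia.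
  - assert (Hria : rest ia) by (apply (rest_a k); auto; lia).
    assert (Hia : (ia < j')%nat) by (unfold Ek in Ej; pose proof (Nat.pow_nonzero 3 (K - S (lg k))); lia).
    assert (Hjia : (j <= ia)%nat).
    { destruct (le_lt_dec j ia); auto. exfalso. apply (Hni j); auto. lia. }
    destruct (Sg_pre ia ltac:(lia) Hria) as [r [Er Hnr]].
    assert (Ej' : Sg j' = V0 :: VL k :: VR k :: Sg ia) by (apply (Hblk r); auto).
    destruct (IH ia Hia j ltac:(lia) Hr Hria) as [Hs1 Hs2].
    rewrite Ej'. split.
    + do 3 apply suff_cons. auto.
    + intros _. destruct (classic (Sg j = Sg ia)) as [Eq|Neq].
      * exists k. split; auto. split. rewrite <- Ha. apply sg_le; auto.
        rewrite Eq. apply suff_cons, suff_cons. exists []; reflexivity.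
      * destruct (Hs2 Neq) as [k' [Hk' [Hle Hs]]]. exists k'. split; auto. split; auto.
        do 3 apply suff_cons. auto.
Qed.


Definition wf := vv 0.
Definition Sf (j : nat) := stk wf j.

Lemma SfSg : Sf Mk = Sg Mk.
Proof. apply V3. Qed.

Definition idx_spec (x : R) (i : nat) : Prop :=
  (i <= Mk)%nat /\ sg i <= x /\ forall j, (j <= Mk)%nat -> sg j <= x -> (j <= i)%nat.

Lemma idx_ex x : 0 <= x <= 1 -> exists i, idx_spec x i.
Proof.
  intros Hx. unfold idx_spec. destruct (classic (sg Mk <= x)) as [HM|HM].
  - exists Mk. refine (conj (Nat.le_refl _) (conj HM _)). intros; lia.
  - assert (P0 : sg 0 <= x) by (rewrite sg_0; lra).
    destruct (crossing (fun i => sg i <= x) 0 Mk ltac:(lia) P0 HM) as [i [Hi [P1 NP1]]].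
    exists i. split; [lia|]. split; auto. intros j Hj Hjx.
    destruct (le_lt_dec j i) as [|Hlt]; auto. exfalso. apply NP1. pose proof (sg_le (S i) j ltac:(lia)). lra.
Qed.

Lemma idx_rest be i : idx_spec (xpt be) i -> rest i.
Proof.
  intros [Hi [Hix Hmax]] k Hk Hg.
  pose proof (xpt_not_gap be k ltac:(lia)) as Hng.
  assert (Hb : b_k k <= xpt be) by (destruct (Rle_dec (b_k k) (xpt be)); auto; exfalso; apply Hng; lra).
  destruct (align k Hk) as [ia [Ha [Hb' HM]]].
  assert (Hle := Hmax _ HM ltac:(lra)).
  assert (Hlt : (i < ia + 3 ^ (K - S (lg k)))%nat) by (apply sg_lt_inv; lra). lia.
Qed.

Definition Tprop (i : nat) (t : R) : Prop :=
  unit_I t /\ f t = origin /\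
  (forall i0, first_hit wf (Sg i) i0 -> Sg i <> [V0] -> sg (i0 - 1) <= t) /\
  (forall k i2, suff (VR k :: Sg i) (Sf Mk) -> first_hit wf (VR k :: Sg i) i2 -> t <= sg i2).

Lemma fh_le P : suff P (Sf Mk) -> P <> [] -> exists i0, (i0 <= Mk)%nat /\ first_hit wf P i0.
Proof. intros. apply first_hit_ex_suff; auto. Qed.

Lemma T_ex i : (i <= Mk)%nat -> rest i -> exists t, Tprop i t.
Proof.
  intros Hi Hr. set (P := Sg i).
  assert (HPS : suff P (Sf Mk)) by (rewrite SfSg; apply (G_B Mk i); auto; try lia; apply rest_Mk).
  assert (HP0 : P <> []) by (destruct (stk_top wg i) as [r E]; unfold P, Sg; rewrite E; discriminate).
  destruct (classic (P = [V0])) as [E0|N0].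
  { exists 0. split; [split; lra|]. split; [apply f0|]. split.
    - intros i0 _ C. contradiction.
    - intros k i2 _ _. unfold sg. apply Rmult_le_pos. apply pos_INR. left; apply hh_pos. }
  destruct (fh_le P HPS HP0) as [i0 [Hi0 Hf0]].
  destruct (classic (exists k', suff (VR k' :: P) (Sf Mk))) as [[k' Hk']|Nk].
  2:{ exists 1. split; [split; lra|]. split; [apply f1|]. split.
      - intros i0' Hf0' _. rewrite (first_hit_unique _ _ _ _ Hf0' Hf0). rewrite <- sg_Mk. apply sg_le. lia.
      - intros k i2 C. exfalso. eauto. }
  destruct (G_A i Hi Hr) as [C|[k [r [Hk [Hbk EP]]]]]; [contradiction|].
  fold P in EP.
  assert (HPne : P <> Sf Mk).
  { intros C. pose proof (suff_len _ _ Hk'). rewrite <- C in H0. simpl in H0. lia. }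
  destruct (G_B Mk i ltac:(lia) Hr rest_Mk) as [_ Hgb].
  destruct (Hgb ltac:(rewrite <- SfSg; auto)) as [k'' [Hk'' [Hsa Hs'']]].
  fold P in Hs''. rewrite <- SfSg in Hs''.
  assert (k'' = k') by (pose proof (suff_same_len_head _ _ _ _ Hs'' Hk') as E; inversion E; auto). subst k''.
  destruct (first_hit_push wf V0 (VL k :: VR k :: r) i0 ltac:(rewrite <- EP; auto) ltac:(discriminate))
    as [i1 [Ei0 [Hs1 Hw0]]].
  assert (Hw1 : wf i1 = VL k) by (destruct (stk_top wf i1) as [r' E]; unfold Sf in *; rewrite Hs1 in E; inversion E; auto).
  destruct (fh_le (VR k' :: P) Hk' ltac:(discriminate)) as [i2 [Hi2 Hf2]].
  destruct (first_hit_push wf (VR k') P i2 Hf2 HP0) as [i3 [Ei2 [Hs3 Hw2]]].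
  assert (Hle02 : (i0 <= i2)%nat).
  { apply (first_hit_mono wf P (VR k' :: P) i0 i2 Hf0); auto. apply (proj1 Hf2). exists [VR k']; reflexivity. }
  assert (St1 : star N (VL k) (f (sg i1))).
  { rewrite <- Hw1. apply V4; try lia. apply sg_I; lia. rewrite Rminus_diag, Rabs_R0; lra. }
  assert (St2 : star N (VR k') (f (sg i2))).
  { rewrite <- Hw2. apply V4; try lia. apply sg_I; lia. rewrite Rminus_diag, Rabs_R0; lra. }
  pose proof (star_VL_ne N k _ St1) as Hne1. pose proof (star_VR_ne N k' _ St2) as Hne2.
  destruct St1 as [Hk1 [Hc1 _]]. destruct St2 as [Hk2 [Hc2 _]].
  assert (Hkk : k <> k') by (intros ->; pose proof (ab_lt k'); lra).
  destruct (zero_between f (sg i1) (sg i2) k k' fcont fhaw) as [t [Ht Hft]]; auto.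
  - apply sg_I; lia.
  - apply sg_le; lia.
  - apply sg_I; lia.
  - lia.
  - lia.
  - exists t. split. split; [pose proof (sg_I i1 ltac:(lia)) as [? ?]|pose proof (sg_I i2 ltac:(lia)) as [? ?]]; lra.
    split; auto. split.
    + intros i0' Hf0' _. rewrite (first_hit_unique _ _ _ _ Hf0' Hf0), Ei0. simpl. rewrite Nat.sub_0_r. lra.
    + intros k0 i2' Hsk Hf2'. assert (k0 = k') by (pose proof (suff_same_len_head _ _ _ _ Hsk Hk') as E; inversion E; auto).
      subst k0. rewrite (first_hit_unique _ _ _ _ Hf2' Hf2). lra.
Qed.


Lemma sep_main be be' m i i' t t' : (1 <= m <= N)%nat -> xpt be <= a_k m -> b_k m <= xpt be' ->
  idx_spec (xpt be) i -> idx_spec (xpt be') i' -> Tprop i t -> Tprop i' t' -> t + dm m <= t'.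
Proof.
  intros Hm Hx Hx' Hi Hi' Ht Ht'.
  pose proof (idx_rest be i Hi) as Hri. pose proof (idx_rest be' i' Hi') as Hri'.
  destruct Hi as [HiM [Hix Himax]]. destruct Hi' as [Hi'M [Hix' Hi'max]].
  destruct (align m Hm) as [ia [Ha [Hb HM]]]. fold (Ek m) in Hb, HM.
  set (ib := (ia + Ek m)%nat) in *.
  assert (Hria : rest ia) by (apply (rest_a m); auto; lia).
  assert (Hrib : rest ib) by (apply (rest_b m); auto; lia).
  assert (Hiia : (i <= ia)%nat) by (apply sg_le_inv; lra).
  assert (Hibi : (ib <= i')%nat) by (apply Hi'max; auto; lra).
  set (Q := Sg ia).
  destruct (Sg_pre ia ltac:(lia) Hria) as [r [Er Hnr]].
  assert (Eib : Sg ib = V0 :: VL m :: VR m :: Q) by (unfold ib, Ek, Q; rewrite Er; apply block; auto).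
  assert (S1 : suff (Sg i) Q) by (apply (G_B ia i); auto; lia).
  assert (S2 : suff (Sg ib) (Sg i')) by (apply (G_B i' ib); auto; lia).
  assert (S3 : suff (Sg i') (Sf Mk)) by (rewrite SfSg; apply (G_B Mk i'); auto; try lia; apply rest_Mk).
  set (QL := VL m :: VR m :: Q).
  assert (SQL : suff QL (Sg ib)) by (rewrite Eib; exists [V0]; reflexivity).
  assert (SQLS : suff QL (Sf Mk)) by (eapply suff_trans; [exact SQL|eapply suff_trans; eauto]).
  destruct (fh_le QL SQLS ltac:(discriminate)) as [ib0 [Hib0 Hfb]].
  destruct (first_hit_push wf (VL m) (VR m :: Q) ib0 Hfb ltac:(discriminate)) as [ib1 [Eb0 [Sb1 Wb0]]].
  assert (Wb1 : wf ib1 = VR m) by (destruct (stk_top wf ib1) as [r' E]; unfold Sf in *; rewrite Sb1 in E; inversion E; auto).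
  assert (StL : star N (VL m) (f (sg ib0))).
  { rewrite <- Wb0. apply V4; try lia. apply sg_I; lia. rewrite Rminus_diag, Rabs_R0; lra. }
  assert (StR : star N (VR m) (f (sg ib0))).
  { rewrite <- Wb1. apply V4; try lia. apply sg_I; lia. rewrite Eb0. apply sg_dist; lia. }
  pose proof (star_RL N m _ StR StL) as Hy.
  assert (Hlen1 : (length (Sg i) <= length Q)%nat) by (apply suff_len; auto).
  assert (Ht1 : t <= sg ib0).
  { assert (Hne : Sg i <> Sg Mk).
    { intros C. pose proof (suff_len _ _ SQLS). rewrite SfSg, <- C in H0. unfold QL in H0. simpl in H0. lia. }
    destruct (proj2 (G_B Mk i ltac:(lia) Hri rest_Mk) Hne) as [k' [Hk' [_ Hs']]].
    rewrite <- SfSg in Hs'.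
    assert (HP0 : Sg i <> []) by (destruct (stk_top wg i) as [r' E]; unfold Sg; rewrite E; discriminate).
    destruct (fh_le _ Hs' ltac:(discriminate)) as [i2 [Hi2 Hf2]].
    destruct Ht as [_ [_ [_ Ht4]]]. specialize (Ht4 k' i2 Hs' Hf2).
    assert (Hsub : suff (VR k' :: Sg i) QL) by (apply (suff_comp _ _ (Sf Mk)); auto; unfold QL; simpl; lia).
    assert (i2 <= ib0)%nat by (apply (first_hit_mono wf _ QL i2 ib0 Hf2); auto; [apply (proj1 Hfb)|discriminate]).
    pose proof (sg_le _ _ H0). lra. }
  assert (Ht2 : sg ib0 <= t').
  { assert (Hlen2 : (length (Sg ib) <= length (Sg i'))%nat) by (apply suff_len; auto).
    rewrite Eib in Hlen2. simpl in Hlen2.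
    assert (HP0 : Sg i' <> [V0]) by (intros C; rewrite C in Hlen2; simpl in Hlen2; lia).
    destruct (fh_le _ S3 ltac:(intros C; rewrite C in Hlen2; simpl in Hlen2; lia)) as [i3 [Hi3 Hf3]].
    destruct Ht' as [_ [_ [Ht3 _]]]. specialize (Ht3 i3 Hf3 HP0).
    assert (SQL' : suff QL (Sg i')) by (exact (suff_trans _ _ _ SQL S2)).
    assert (ib0 <= i3)%nat by (apply (first_hit_mono wf QL (Sg i') ib0 i3 Hfb); auto; [apply (proj1 Hf3)|discriminate]).
    assert (ib0 <> i3).
    { intros ->. assert (QL = Sg i') by (rewrite <- (proj1 Hfb); apply (proj1 Hf3)).
      rewrite <- H1 in Hlen2. unfold QL in Hlen2. simpl in Hlen2. lia. }
    pose proof (sg_le ib0 (i3 - 1) ltac:(lia)). lra. }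
  destruct (dm_spec m) as [Hdm Hdmf].
  destruct (Rle_dec (t + dm m) t') as [|Hlt]; auto. exfalso.
  destruct Ht as [HtI [Hft _]].
  assert (Hd : dist2 (f (sg ib0)) (f t) < / INR (S m)).
  { apply Hdmf; auto. apply sg_I; lia. rewrite Rabs_right; lra. }
  rewrite Hft in Hd. pose proof (dist2_ge_y (f (sg ib0)) origin) as Dy. unfold origin in Dy at 1. simpl in Dy.
  rewrite Rminus_0_r in Dy.
  assert (/ INR (S m) < / INR m) by (apply Rinv_lt_contravar; [apply Rmult_lt_0_compat; apply lt_0_INR; lia| apply lt_INR; lia]).
  assert (0 < snd (f (sg ib0))) by (pose proof (Rinv_0_lt_compat (INR m) ltac:(apply lt_0_INR; lia)); lra).
  rewrite Rabs_right in Dy by lra. lra.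
Qed.

End Grid.

Lemma perN N : (1 <= N)%nat -> exists T : (nat -> bool) -> R,
  (forall be, unit_I (T be) /\ f (T be) = origin) /\
  (forall be be' m, (1 <= m <= N)%nat -> xpt be <= a_k m -> b_k m <= xpt be' -> T be + dm m <= T be').
Proof.
  intros HN.
  destruct (lebesgue N HN) as [L [HL HLeb]].
  assert (Hex : forall z, exists v, hawaiian z -> forall z', hawaiian z' -> dist2 z' z < L -> star N v z').
  { intros z. destruct (classic (hawaiian z)) as [Hz|Hz].
    - destruct (HLeb z Hz) as [v Hv]. exists v. auto.
    - exists V0. intros C; contradiction. }
  set (vc := fun z => proj1_sig (constructive_indefinite_description _ (Hex z))).
  assert (Hvc : forall z, hawaiian z -> forall z', hawaiian z' -> dist2 z' z < L -> star N (vc z) z').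
  { intros z. unfold vc. destruct (constructive_indefinite_description _ (Hex z)) as [v Hv]. exact Hv. }
  destruct (uc2 H HH L HL) as [rho [Hrho Hu]].
  destruct (pow3_large rho Hrho) as [K0 HK0].
  set (K := Nat.max K0 (N + 2)).
  assert (HK : (N + 2 <= K)%nat) by (unfold K; lia).
  assert (HKr : / 3 ^ K < rho).
  { eapply Rle_lt_trans; [|exact HK0]. apply inv_le_inv. apply pow3_pos. apply Rle_pow; [lra|unfold K; lia]. }
  assert (HTe : forall be, exists t, exists i, idx_spec K (xpt be) i /\ Tprop vc K i t).
  { intros be. destruct (idx_ex N HN K HK (xpt be) (xpt_01 be)) as [i Hi].
    pose proof (idx_rest N HN K HK be i Hi) as Hr.
    destruct (T_ex N HN L HL vc Hvc rho Hrho Hu K HK HKr i (proj1 Hi) Hr) as [t Ht].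
    exists t, i. auto. }
  exists (fun be => proj1_sig (constructive_indefinite_description _ (HTe be))).
  split.
  - intros be. destruct (constructive_indefinite_description _ (HTe be)) as [t [i [Hi Ht]]]. simpl.
    destruct Ht as [? [? _]]. auto.
  - intros be be' m Hm Hx Hx'.
    destruct (constructive_indefinite_description _ (HTe be)) as [t [i [Hi Ht]]].
    destruct (constructive_indefinite_description _ (HTe be')) as [t' [i' [Hi' Ht']]]. simpl.
    apply (sep_main N HN L HL vc Hvc rho Hrho Hu K HK HKr be be' m i i' t t'); auto.
Qed.


Lemma main_card : card_ge_c (fibre f origin).
Proof.
  set (HP := fun n => perN (S n) ltac:(lia)).
  set (Tn := fun n => proj1_sig (constructive_indefinite_description _ (HP n))).
  assert (Tn_spec : forall n, (forall be, unit_I (Tn n be) /\ f (Tn n be) = origin) /\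
    (forall be be' m, (1 <= m <= S n)%nat -> xpt be <= a_k m -> b_k m <= xpt be' -> Tn n be + dm m <= Tn n be')).
  { intros n. unfold Tn. destruct (constructive_indefinite_description _ (HP n)) as [T HT]. exact HT. }
  assert (HuT : forall be n, 0 <= Tn n be <= 1) by (intros be n; apply (proj1 (Tn_spec n) be)).
  set (T := fun be => lsup (fun n => Tn n be) (HuT be)).
  assert (fT : forall be, unit_I (T be) /\ f (T be) = origin).
  { intros be. pose proof (lsup_01 _ (HuT be)) as HT01. fold (T be) in HT01. split; auto.
    destruct (classic (f (T be) = origin)) as [|Hne]; auto. exfalso.
    set (d := dist2 (f (T be)) origin).
    assert (Hd : 0 < d).
    { destruct (dist2_pos (f (T be)) origin) as [|E]; auto. exfalso. apply Hne. apply dist2_zero. auto. }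
    destruct (fcont (T be) HT01 d Hd) as [del [Hdel Hc]].
    destruct (L2 _ (HuT be) del Hdel) as [M HM].
    destruct (L1 _ (HuT be) del M Hdel) as [n [Hn1 Hn2]].
    specialize (HM n Hn1). fold (T be) in HM, Hn2.
    destruct (proj1 (Tn_spec n) be) as [HI Hz].
    assert (Rabs (Tn n be - T be) < del) by (unfold Rabs; destruct (Rcase_abs _); lra).
    specialize (Hc (Tn n be) HI H0). rewrite Hz, dist2_sym in Hc. unfold d in Hc. lra. }
  assert (Tlt : forall be be' i0, be i0 = false -> be' i0 = true -> (forall j, (j < i0)%nat -> be j = be' j) ->
      T be < T be').
  { intros be be' i0 H1 H2 Hag.
    destruct (xpt_sep be be' i0 Hag H1 H2) as [Hk [Hx Hx']].
    set (k := (2 ^ i0 + jb be i0)%nat) in *.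
    assert (T be + dm k <= T be').
    { unfold T. apply (lsup_shift _ _ (HuT be) (HuT be') (dm k) k).
      intros n Hn. apply (proj2 (Tn_spec n)); auto; lia. }
    pose proof (proj1 (dm_spec k)). lra. }
  assert (Tinj : forall be be', (exists i, be i <> be' i) -> T be <> T be').
  { intros be be' Hd. destruct (least_diff be be' Hd) as [i0 [Hi0 Hag]].
    destruct (be i0) eqn:E1, (be' i0) eqn:E2; try congruence.
    - assert (T be' < T be) by (apply (Tlt be' be i0); auto; intros j Hj; symmetry; auto). lra.
    - assert (T be < T be') by (apply (Tlt be be' i0); auto). lra. }
  exists (fun r => T (beta r)). split.
  - intros r. exact (fT (beta r)).
  - intros r1 r2 Heq. destruct (Rtotal_order r1 r2) as [Hlt|[Heq'|Hgt]]; auto.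
    + exfalso. destruct (beta_sep r1 r2 Hlt) as [n [B1 B2]].
      apply (Tinj (beta r1) (beta r2)); auto. exists n. congruence.
    + exfalso. destruct (beta_sep r2 r1 Hgt) as [n [B1 B2]].
      apply (Tinj (beta r2) (beta r1)); auto. exists n. congruence.
Qed.

End Main.

Open Scope R_scope.
Theorem lemma7p9 (f : R -> pt) :
  loop_in_X f -> homotopic_rel f g_loop ->
  card_ge_c (fibre f origin) /\ ~ c_loop f.
Proof.
  intros Hf [H [HH [Hhaw [H0 [H1 Hend]]]]].
  assert (C : card_ge_c (fibre f origin)) by (eapply main_card; eauto).
  split; auto. intros [_ Hc]. exact (Hc origin C).
Qed.
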